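(* Suppose that each of the equations $\partial_{\overline z}W=aW+b\overline W$ and $\partial_{\overline z}V=-aV-\overline b\,\overline V$ possesses a Cauchy kernel in $\mathbb C_j$ behaving like $\mathcal O(|z|^{-1})$ as $z\to\infty$. Then such Cauchy kernels are unique (for each of the two equations there is only one Cauchy kernel in $\mathbb C_j$ behaving like $\mathcal O(|z|^{-1})$ as $z\to\infty$).
   Context: Bicomplex numbers: $i,j$ imaginary units, $i^2=j^2=-1$, $ij=ji$; $\mathbb C_i=\{a+ib\}$, $\mathbb C_j=\{a+jb\}$ ($a,b$ real); $\mathbb B=\{u+jv:u,v\in\mathbb C_i\}$, $\overline{u+jv}=u-jv$. Plane $=\mathbb C_j$, $z=x+jy$, $\partial_{\overline z}=\frac12(\partial_x+j\partial_y)$. Norm: with $W^\pm=\operatorname{Sc}W\mp i\operatorname{Vec}W$, $|W|=\frac12(|W^+|+|W^-|)$; $\mathcal O(|z|^{-1})$ means $|z||Z(z)|$ bounded for large $|z|$. Setting: $a,b$ are $\mathbb B$-valued Hölder continuous functions on $\mathbb C_j$; solutions are $\mathbb B$-valued functions with continuous first partials satisfying the equation. A Cauchy kernel in $\mathbb C_j$ is a family $Z^{(-1)}(1,z_0,z)$, $Z^{(-1)}(j,z_0,z)$, $z_0\in\mathbb C_j$, both solutions in $z\ne z_0$, with $\lim_{z\to z_0}(z-z_0)Z^{(-1)}(\alpha,z_0,z)=\alpha$, $\alpha=1,j$. *)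

(* Defs.v *)
From Stdlib Require Import Reals Lra.
From Coquelicot Require Import Coquelicot.
Open Scope R_scope.

(** * Bicomplex numbers
    W = b0 + i b1 + j b2 + i j b3,  i^2 = j^2 = -1, ij = ji.
    Equivalently W = u + j v with u = b0 + i b1, v = b2 + i b3 in C_i. *)
Record B := mkB { b0 : R; b1 : R; b2 : R; b3 : R }.

Definition Bzero : B := mkB 0 0 0 0.
Definition Bone : B := mkB 1 0 0 0.
Definition Bj : B := mkB 0 0 1 0.

Definition Badd (w v : B) : B :=
  mkB (b0 w + b0 v) (b1 w + b1 v) (b2 w + b2 v) (b3 w + b3 v).
Definition Bopp (w : B) : B := mkB (- b0 w) (- b1 w) (- b2 w) (- b3 w).
Definition Bsub (w v : B) : B := Badd w (Bopp v).
Definition Bscal (r : R) (w : B) : B :=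
  mkB (r * b0 w) (r * b1 w) (r * b2 w) (r * b3 w).

(** product, from i^2 = j^2 = -1, ij = ji (hence (ij)^2 = 1) *)
Definition Bmul (a c : B) : B :=
  mkB (b0 a * b0 c - b1 a * b1 c - b2 a * b2 c + b3 a * b3 c)
      (b0 a * b1 c + b1 a * b0 c - b2 a * b3 c - b3 a * b2 c)
      (b0 a * b2 c + b2 a * b0 c - b1 a * b3 c - b3 a * b1 c)
      (b0 a * b3 c + b3 a * b0 c + b1 a * b2 c + b2 a * b1 c).

(** conjugation  conj(u + j v) = u - j v *)
Definition Bconj (w : B) : B := mkB (b0 w) (b1 w) (- b2 w) (- b3 w).

Definition Ci := (R * R)%type.
Definition Ci_mod (c : Ci) : R := sqrt (fst c * fst c + snd c * snd c).
Definition Ci_add (c d : Ci) : Ci := (fst c + fst d, snd c + snd d).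
Definition Ci_sub (c d : Ci) : Ci := (fst c - fst d, snd c - snd d).
Definition Ci_mul_i (c : Ci) : Ci := (- snd c, fst c).

Definition Sc (w : B) : Ci := (b0 w, b1 w).
Definition Vec (w : B) : Ci := (b2 w, b3 w).
Definition Bplus (w : B) : Ci := Ci_sub (Sc w) (Ci_mul_i (Vec w)).
Definition Bminus (w : B) : Ci := Ci_add (Sc w) (Ci_mul_i (Vec w)).

Definition Bnorm (w : B) : R := (Ci_mod (Bplus w) + Ci_mod (Bminus w)) / 2.

(** * The plane C_j:  points z = x + j y, represented as pairs (x, y) *)
Definition Pt := (R * R)%type.
Definition zB (z : Pt) : B := mkB (fst z) 0 (snd z) 0.
Definition Pdist (z w : Pt) : R := Bnorm (Bsub (zB z) (zB w)).
Definition Pabs (z : Pt) : R := Bnorm (zB z).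

Definition holder (f : Pt -> B) : Prop :=
  exists (mu C : R), 0 < mu <= 1 /\ 0 <= C /\
    forall z w : Pt, z <> w -> Bnorm (Bsub (f z) (f w)) <= C * Rpower (Pdist z w) mu.

Definition comps : list (B -> R) := b0 :: b1 :: b2 :: b3 :: nil.

Definition is_pdx (W : Pt -> B) (z : Pt) (L : B) : Prop :=
  forall c, List.In c comps ->
    is_derive (fun t : R => c (W (t, snd z))) (fst z) (c L).
Definition is_pdy (W : Pt -> B) (z : Pt) (L : B) : Prop :=
  forall c, List.In c comps ->
    is_derive (fun t : R => c (W (fst z, t))) (snd z) (c L).

Definition cont_within (D : Pt -> Prop) (f : Pt -> B) (z : Pt) : Prop :=
  forall eps, 0 < eps -> exists delta, 0 < delta /\
    forall w, D w -> Pdist w z < delta -> Bnorm (Bsub (f w) (f z)) < eps.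

Definition dbar_of (Wx Wy : B) : B := Bscal (/ 2) (Badd Wx (Bmul Bj Wy)).

Definition is_solution_on (A Bc : Pt -> B) (D : Pt -> Prop) (W : Pt -> B) : Prop :=
  exists Wx Wy : Pt -> B,
    forall z, D z ->
      is_pdx W z (Wx z) /\ is_pdy W z (Wy z) /\
      cont_within D Wx z /\ cont_within D Wy z /\
      dbar_of (Wx z) (Wy z) = Badd (Bmul (A z) (W z)) (Bmul (Bc z) (Bconj (W z))).

Definition punctured (z0 : Pt) : Pt -> Prop := fun z => z <> z0.

Definition kernel_limit (Z : Pt -> B) (z0 : Pt) (alpha : B) : Prop :=
  forall eps, 0 < eps -> exists delta, 0 < delta /\
    forall z, z <> z0 -> Pdist z z0 < delta ->
      Bnorm (Bsub (Bmul (Bsub (zB z) (zB z0)) (Z z)) alpha) < eps.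

(** A Cauchy kernel in C_j for  dbar W = A W + Bc conj W :
    Z1 z0 = Z^{(-1)}(1, z0, .),  Zj z0 = Z^{(-1)}(j, z0, .) *)
Definition cauchy_kernel (A Bc : Pt -> B) (Z1 Zj : Pt -> Pt -> B) : Prop :=
  forall z0 : Pt,
    is_solution_on A Bc (punctured z0) (Z1 z0) /\
    is_solution_on A Bc (punctured z0) (Zj z0) /\
    kernel_limit (Z1 z0) z0 Bone /\
    kernel_limit (Zj z0) z0 Bj.

Definition bigO_inv (Z : Pt -> B) : Prop :=
  exists M R0 : R, forall z, R0 < Pabs z -> Pabs z * Bnorm (Z z) <= M.

Definition decaying_kernel (A Bc : Pt -> B) (Z1 Zj : Pt -> Pt -> B) : Prop :=
  cauchy_kernel A Bc Z1 Zj /\ forall z0, bigO_inv (Z1 z0) /\ bigO_inv (Zj z0).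

Definition unique_decaying_kernel (A Bc : Pt -> B) : Prop :=
  forall Z1 Zj Z1' Zj' : Pt -> Pt -> B,
    decaying_kernel A Bc Z1 Zj -> decaying_kernel A Bc Z1' Zj' ->
    forall z0 z, z <> z0 -> Z1 z0 z = Z1' z0 z /\ Zj z0 z = Zj' z0 z.

(* Main.v *)
Require Import Defs.
From Stdlib Require Import Reals Lra List.
From Coquelicot Require Import Coquelicot.
Open Scope R_scope.

Lemma dR_plus f g x df dg : is_derive f x df -> is_derive g x dg ->
  is_derive (fun t => f t + g t) x (df + dg).
Proof. intros H1 H2. exact (is_derive_plus f g x df dg H1 H2). Qed.
Lemma dR_minus f g x df dg : is_derive f x df -> is_derive g x dg ->
  is_derive (fun t => f t - g t) x (df - dg).
Proof. intros H1 H2. exact (is_derive_minus f g x df dg H1 H2). Qed.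
Lemma dR_mult f g x df dg : is_derive f x df -> is_derive g x dg ->
  is_derive (fun t => f t * g t) x (df * g x + f x * dg).
Proof. intros H1 H2. exact (is_derive_mult f g x df dg H1 H2 Rmult_comm). Qed.
Lemma dR_opp f x df : is_derive f x df -> is_derive (fun t => - f t) x (- df).
Proof. intros H1. exact (is_derive_opp f x df H1). Qed.
Lemma dR_ext (f g : R -> R) (x df dg : R) : (forall t, f t = g t) -> df = dg -> is_derive f x df -> is_derive g x dg.
Proof. intros H1 H2 H3. subst. apply (is_derive_ext f g); auto. Qed.

Definition Irect (P Q : R -> R -> R) A B C D :=
  RInt (fun x => P x C) A B + RInt (fun y => Q B y) C D
  - RInt (fun x => P x D) A B - RInt (fun y => Q A y) C D.

Definition nb (p q : Pt) (x y : R) := (x,y) <> p /\ (x,y) <> q.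

Definition cform (p q : Pt) (P Q : R -> R -> R) : Prop :=
  exists Px Py Qx Qy : R -> R -> R, forall x y, nb p q x y ->
   is_derive (fun t => P t y) x (Px x y) /\ is_derive (fun t => P x t) y (Py x y) /\
   is_derive (fun t => Q t y) x (Qx x y) /\ is_derive (fun t => Q x t) y (Qy x y) /\
   continuity_2d_pt Qx x y /\ continuity_2d_pt Py x y /\ Py x y = Qx x y.

Definition avoid (p : Pt) A B C D := fst p < A \/ B < fst p \/ snd p < C \/ D < snd p.

Lemma avoid_ne p A B C D x y : avoid p A B C D -> A <= x <= B -> C <= y <= D -> (x,y) <> p.
Proof.
  intros H Hx Hy E. destruct p as [px py]. injection E as E1 E2. subst.
  unfold avoid in H; simpl in H. lra.
Qed.

Lemma avoid_open p A B C D : avoid p A B C D ->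
  exists e, 0 < e /\ avoid p (A-e) (B+e) (C-e) (D+e).
Proof.
  unfold avoid. intros [H|[H|[H|H]]].
  - exists ((A - fst p)/2). split; lra.
  - exists ((fst p - B)/2). split; lra.
  - exists ((C - snd p)/2). split; lra.
  - exists ((snd p - D)/2). split; lra.
Qed.

Lemma c2d_ext f g x y d : continuity_2d_pt f x y -> 0 < d ->
  (forall u v, Rabs (u-x) < d -> Rabs (v-y) < d -> g u v = f u v) ->
  continuity_2d_pt g x y.
Proof.
  intros Hf Hd He eps. destruct (Hf eps) as [del H].
  assert (Hm : 0 < Rmin del d) by (apply Rmin_pos; [apply cond_pos|lra]).
  exists (mkposreal _ Hm). simpl. intros u v Hu Hv.
  rewrite He by (apply Rlt_le_trans with (1:=Hu) || apply Rlt_le_trans with (1:=Hv); apply Rmin_r).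
  rewrite He by (rewrite Rminus_eq_0, Rabs_R0; lra).
  apply H; eapply Rlt_le_trans; eauto; apply Rmin_l.
Qed.

Lemma c2d_cont_y f x y : continuity_2d_pt f x y -> continuous (fun v => f x v) y.
Proof.
  intros H. apply (continuity_pt_filterlim (fun v => f x v)).
  intros eps Heps. destruct (H (mkposreal _ Heps)) as [d Hd].
  exists d. split. apply cond_pos. intros v [_ Hv]. unfold R_dist in *. apply Hd.
  rewrite Rminus_eq_0, Rabs_R0. apply cond_pos.
  exact Hv.
Qed.

Lemma cf_Ph p q P Q x y : cform p q P Q -> nb p q x y -> continuous (fun t => P t y) x.
Proof. intros [Px [Py [Qx [Qy H]]]] N. destruct (H x y N) as [H1 _].
  apply (ex_derive_continuous (K:=R_AbsRing) (fun t => P t y)). eexists; exact H1. Qed.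
Lemma cf_Pv p q P Q x y : cform p q P Q -> nb p q x y -> continuous (fun t => P x t) y.
Proof. intros [Px [Py [Qx [Qy H]]]] N. destruct (H x y N) as [_ [H1 _]].
  apply (ex_derive_continuous (K:=R_AbsRing) (fun t => P x t)). eexists; exact H1. Qed.
Lemma cf_Qh p q P Q x y : cform p q P Q -> nb p q x y -> continuous (fun t => Q t y) x.
Proof. intros [Px [Py [Qx [Qy H]]]] N. destruct (H x y N) as [_ [_ [H1 _]]].
  apply (ex_derive_continuous (K:=R_AbsRing) (fun t => Q t y)). eexists; exact H1. Qed.
Lemma cf_Qv p q P Q x y : cform p q P Q -> nb p q x y -> continuous (fun t => Q x t) y.
Proof. intros [Px [Py [Qx [Qy H]]]] N. destruct (H x y N) as [_ [_ [_ [H1 _]]]].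
  apply (ex_derive_continuous (K:=R_AbsRing) (fun t => Q x t)). eexists; exact H1. Qed.

Lemma exR_h p q P Q a b y : cform p q P Q ->
  (forall x, Rmin a b <= x <= Rmax a b -> nb p q x y) -> ex_RInt (fun x => P x y) a b.
Proof. intros H N. apply (ex_RInt_continuous (V:=R_CompleteNormedModule)). intros z Hz. eapply cf_Ph; eauto. Qed.
Lemma exR_v p q P Q a b x : cform p q P Q ->
  (forall y, Rmin a b <= y <= Rmax a b -> nb p q x y) -> ex_RInt (fun y => Q x y) a b.
Proof. intros H N. apply (ex_RInt_continuous (V:=R_CompleteNormedModule)). intros z Hz. eapply cf_Qv; eauto. Qed.
Lemma exR_hP p q P Q a b y : cform p q P Q ->
  (forall x, Rmin a b <= x <= Rmax a b -> nb p q x y) -> ex_RInt (fun x => P x y) a b.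
Proof. apply exR_h. Qed.

Lemma avoid_nb p q A B C D x y : avoid p A B C D -> avoid q A B C D ->
  A <= x <= B -> C <= y <= D -> nb p q x y.
Proof. intros; split; eapply avoid_ne; eauto. Qed.

Lemma Rmin_Rmax_in a b z A B : A <= a <= B -> A <= b <= B -> Rmin a b <= z <= Rmax a b -> A <= z <= B.
Proof. intros. unfold Rmin, Rmax in *. destruct Rle_dec; lra. Qed.

Lemma rect_zero p q P Q A B C D : cform p q P Q -> A < B -> C <= D ->
  avoid p A B C D -> avoid q A B C D -> Irect P Q A B C D = 0.
Proof.
  intros HF HAB HCD Hp Hq.
  destruct (avoid_open p A B C D Hp) as [e1 [He1 Hp1]].
  destruct (avoid_open q A B C D Hq) as [e2 [He2 Hq1]].
  set (e := Rmin e1 e2).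
  assert (He : 0 < e) by (apply Rmin_pos; lra).
  assert (Hp2 : avoid p (A-e) (B+e) (C-e) (D+e)).
  { unfold avoid in *. assert (e <= e1) by apply Rmin_l. lra. }
  assert (Hq2 : avoid q (A-e) (B+e) (C-e) (D+e)).
  { unfold avoid in *. assert (e <= e2) by apply Rmin_r. lra. }
  assert (NB : forall x y, A - e <= x <= B + e -> C - e <= y <= D + e -> nb p q x y).
  { intros; eapply avoid_nb; eauto. }
  pose proof HF as HF'. destruct HF' as [Px [Py [Qx [Qy HH]]]].
  set (g := fun t => RInt (fun x => P x C) A t - RInt (fun x => P x D) A t
                     + RInt (fun y => Q t y) C D - RInt (fun y => Q A y) C D).
  assert (Hg : forall t, A <= t <= B -> is_derive g t zero).
  { intros t Ht.
    assert (D1 : forall y0, C - e <= y0 <= D + e -> is_derive (RInt (fun x => P x y0) A) t (P t y0)).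
    { intros y0 Hy0. apply (is_derive_RInt (fun x => P x y0) (RInt (fun x => P x y0) A) A t).
      - exists (mkposreal e He). intros b Hb. change (Rabs (b - t) < e) in Hb.
        apply (RInt_correct (V:=R_CompleteNormedModule) (fun x => P x y0)).
        eapply exR_h; [exact HF|]. intros x Hx. apply NB; [|lra].
        apply Rabs_lt_between' in Hb.
        apply (Rmin_Rmax_in A b); auto; lra.
      - eapply cf_Ph; [exact HF|]. apply NB; lra. }
    assert (D3 : is_derive (fun u => RInt (fun y => Q u y) C D) t
                  (RInt (fun y => Derive (fun u => Q u y) t) C D)).
    { apply (is_derive_RInt_param (fun u y => Q u y)).
      - exists (mkposreal e He). intros u Hu y Hy. change (Rabs (u - t) < e) in Hu.
        apply Rabs_lt_between' in Hu. rewrite Rmin_left, Rmax_right in Hy by lra.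
        destruct (HH u y) as [_ [_ [H3 _]]]. apply NB; lra. eexists; exact H3.
      - intros y Hy. rewrite Rmin_left, Rmax_right in Hy by lra.
        destruct (HH t y) as [_ [_ [_ [_ [H5 _]]]]]. apply NB; lra.
        apply (c2d_ext Qx _ t y e H5 He). intros u v Hu Hv.
        apply Rabs_lt_between' in Hu. apply Rabs_lt_between' in Hv.
        apply is_derive_unique. apply (HH u v). apply NB; lra.
      - exists (mkposreal e He). intros u Hu. change (Rabs (u - t) < e) in Hu.
        apply Rabs_lt_between' in Hu.
        eapply exR_v; [exact HF|]. intros y Hy. rewrite Rmin_left, Rmax_right in Hy by lra.
        apply NB; lra. }
    assert (E3 : RInt (fun y => Derive (fun u => Q u y) t) C D = P t D - P t C).
    { rewrite (RInt_ext _ (fun y => Py t y)).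
      - apply is_RInt_unique. apply (is_RInt_derive (fun y => P t y)).
        + intros y Hy. rewrite Rmin_left, Rmax_right in Hy by lra.
          apply (HH t y). apply NB; lra.
        + intros y Hy. rewrite Rmin_left, Rmax_right in Hy by lra.
          apply c2d_cont_y. apply (HH t y). apply NB; lra.
      - intros y Hy. rewrite Rmin_left, Rmax_right in Hy by lra.
        destruct (HH t y) as [_ [_ [H3 [_ [_ [_ H7]]]]]]. apply NB; lra.
        rewrite H7. apply is_derive_unique. exact H3. }
    rewrite E3 in D3.
    assert (DC : is_derive (fun _ : R => RInt (fun y => Q A y) C D) t 0).
    { exact (is_derive_const (K:=R_AbsRing) (RInt (fun y => Q A y) C D) t). }
    assert (DA := D1 C ltac:(lra)). assert (DB := D1 D ltac:(lra)).
    assert (Hall := dR_minus _ _ _ _ _ (dR_plus _ _ _ _ _ (dR_minus _ _ _ _ _ DA DB) D3) DC).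
    unfold g. eapply dR_ext; [intro; reflexivity| |exact Hall].
    unfold zero; simpl. ring. }
  assert (E := eq_is_derive g A B Hg HAB).
  unfold g in E. rewrite RInt_point in E. rewrite RInt_point in E.
  unfold Irect. unfold zero in E; simpl in E. lra.
Qed.

Lemma split_x P Q A m B C D :
  ex_RInt (fun x => P x C) A m -> ex_RInt (fun x => P x C) m B ->
  ex_RInt (fun x => P x D) A m -> ex_RInt (fun x => P x D) m B ->
  Irect P Q A B C D = Irect P Q A m C D + Irect P Q m B C D.
Proof.
  intros H1 H2 H3 H4. unfold Irect.
  rewrite <- (RInt_Chasles (fun x => P x C) A m B H1 H2).
  rewrite <- (RInt_Chasles (fun x => P x D) A m B H3 H4).
  unfold plus; simpl. ring.
Qed.

Lemma split_y P Q A B C m D :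
  ex_RInt (fun y => Q A y) C m -> ex_RInt (fun y => Q A y) m D ->
  ex_RInt (fun y => Q B y) C m -> ex_RInt (fun y => Q B y) m D ->
  Irect P Q A B C D = Irect P Q A B C m + Irect P Q A B m D.
Proof.
  intros H1 H2 H3 H4. unfold Irect.
  rewrite <- (RInt_Chasles (fun y => Q A y) C m D H1 H2).
  rewrite <- (RInt_Chasles (fun y => Q B y) C m D H3 H4).
  unfold plus; simpl. ring.
Qed.

Lemma nb_sym p q x y : nb p q x y -> nb q p x y.
Proof. intros [H1 H2]; split; auto. Qed.

Lemma cform_sym p q P Q : cform p q P Q -> cform q p P Q.
Proof. intros [a [b [c [d H]]]]. exists a, b, c, d. intros x y N. apply H. apply nb_sym; auto. Qed.

Lemma nb_of p q A B C D x y : avoid q A B C D -> A <= x <= B -> C <= y <= D ->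
  (x <> fst p \/ y <> snd p) -> nb p q x y.
Proof.
  intros Hq Hx Hy Hne. split.
  - intro E. subst p. simpl in Hne. tauto.
  - eapply avoid_ne; eauto.
Qed.

Lemma avoid_sub q A B C D A' B' C' D' : avoid q A B C D ->
  A <= A' -> B' <= B -> C <= C' -> D' <= D -> avoid q A' B' C' D'.
Proof. unfold avoid. lra. Qed.

Lemma in_mm a b z : Rmin a b <= z <= Rmax a b -> a <= b -> a <= z <= b.
Proof. intros H Hab. rewrite Rmin_left, Rmax_right in H; lra. Qed.

Ltac exhh HF Hq :=
    eapply exR_h; [exact HF|]; intros ?x ?Hx; apply in_mm in Hx; [|lra];
    eapply nb_of; [exact Hq| | |]; [lra|lra|right; simpl; lra].
Ltac exhv HF Hq :=
    eapply exR_v; [exact HF|]; intros ?y ?Hy; apply in_mm in Hy; [|lra];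
    eapply nb_of; [exact Hq| | |]; [lra|lra|left; simpl; lra].

Lemma single p q P Q A B C D r : cform p q P Q -> 0 < r ->
  A < fst p - r -> fst p + r < B -> C < snd p - r -> snd p + r < D ->
  avoid q A B C D ->
  Irect P Q A B C D = Irect P Q (fst p - r) (fst p + r) (snd p - r) (snd p + r).
Proof.
  intros HF Hr H1 H2 H3 H4 Hq.
  destruct p as [px py]; simpl in *.
  rewrite (split_x P Q A (px - r) B C D); [|exhh HF Hq ..].
  rewrite (split_x P Q (px - r) (px + r) B C D); [|exhh HF Hq ..].
  rewrite (split_y P Q (px - r) (px + r) C (py - r) D); [|exhv HF Hq ..].
  rewrite (split_y P Q (px - r) (px + r) (py - r) (py + r) D); [|exhv HF Hq ..].
  assert (Z1 : Irect P Q A (px - r) C D = 0).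
  { apply (rect_zero (px,py) q); auto; try lra. unfold avoid; simpl; lra.
    apply (avoid_sub q A B C D); auto; lra. }
  assert (Z2 : Irect P Q (px + r) B C D = 0).
  { apply (rect_zero (px,py) q); auto; try lra. unfold avoid; simpl; lra.
    apply (avoid_sub q A B C D); auto; lra. }
  assert (Z3 : Irect P Q (px - r) (px + r) C (py - r) = 0).
  { apply (rect_zero (px,py) q); auto; try lra. unfold avoid; simpl; lra.
    apply (avoid_sub q A B C D); auto; lra. }
  assert (Z4 : Irect P Q (px - r) (px + r) (py + r) D = 0).
  { apply (rect_zero (px,py) q); auto; try lra. unfold avoid; simpl; lra.
    apply (avoid_sub q A B C D); auto; lra. }
  rewrite Z1, Z2, Z3, Z4. ring.
Qed.

Lemma nb_of2 p q x y : (x <> fst p \/ y <> snd p) -> (x <> fst q \/ y <> snd q) -> nb p q x y.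
Proof. intros H1 H2; split; intro E; subst; simpl in *; tauto. Qed.

Ltac exh2h HF := eapply exR_h; [exact HF|]; intros ?x ?Hx; apply in_mm in Hx; [|lra];
          apply nb_of2; right; simpl; lra.
Ltac exh2v HF := eapply exR_v; [exact HF|]; intros ?y ?Hy; apply in_mm in Hy; [|lra];
          apply nb_of2; left; simpl; lra.

Lemma two_x p q P Q A B C D r0 r1 : cform p q P Q -> 0 < r0 -> 0 < r1 ->
  fst p + r0 < fst q - r1 ->
  A < fst p - r0 -> fst p + r0 < B -> C < snd p - r0 -> snd p + r0 < D ->
  A < fst q - r1 -> fst q + r1 < B -> C < snd q - r1 -> snd q + r1 < D ->
  Irect P Q A B C D = Irect P Q (fst p - r0) (fst p + r0) (snd p - r0) (snd p + r0)
                    + Irect P Q (fst q - r1) (fst q + r1) (snd q - r1) (snd q + r1).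
Proof.
  intros HF H0 H1 Hpq. intros.
  set (m := (fst p + r0 + (fst q - r1)) / 2).
  assert (m1 : fst p + r0 < m) by (unfold m; lra).
  assert (m2 : m < fst q - r1) by (unfold m; lra).
  rewrite (split_x P Q A m B C D); [|exh2h HF ..].
  rewrite (single p q P Q A m C D r0); [|first [exact HF | apply cform_sym; exact HF | lra | unfold avoid; lra] ..].
  rewrite (single q p P Q m B C D r1); [|first [exact HF | apply cform_sym; exact HF | lra | unfold avoid; lra] ..].
  reflexivity.
Qed.

Lemma two_y p q P Q A B C D r0 r1 : cform p q P Q -> 0 < r0 -> 0 < r1 ->
  snd p + r0 < snd q - r1 ->
  A < fst p - r0 -> fst p + r0 < B -> C < snd p - r0 -> snd p + r0 < D ->
  A < fst q - r1 -> fst q + r1 < B -> C < snd q - r1 -> snd q + r1 < D ->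
  Irect P Q A B C D = Irect P Q (fst p - r0) (fst p + r0) (snd p - r0) (snd p + r0)
                    + Irect P Q (fst q - r1) (fst q + r1) (snd q - r1) (snd q + r1).
Proof.
  intros HF H0 H1 Hpq. intros.
  set (m := (snd p + r0 + (snd q - r1)) / 2).
  assert (m1 : snd p + r0 < m) by (unfold m; lra).
  assert (m2 : m < snd q - r1) by (unfold m; lra).
  rewrite (split_y P Q A B C m D); [|exh2v HF ..].
  rewrite (single p q P Q A B C m r0); [|first [exact HF | apply cform_sym; exact HF | lra | unfold avoid; lra] ..].
  rewrite (single q p P Q A B m D r1); [|first [exact HF | apply cform_sym; exact HF | lra | unfold avoid; lra] ..].
  reflexivity.
Qed.

Lemma two p q P Q A B C D r0 r1 d : cform p q P Q -> 0 < r0 -> 0 < r1 ->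
  (d <= Rabs (fst p - fst q) \/ d <= Rabs (snd p - snd q)) -> r0 < d/2 -> r1 < d/2 ->
  A < fst p - r0 -> fst p + r0 < B -> C < snd p - r0 -> snd p + r0 < D ->
  A < fst q - r1 -> fst q + r1 < B -> C < snd q - r1 -> snd q + r1 < D ->
  Irect P Q A B C D = Irect P Q (fst p - r0) (fst p + r0) (snd p - r0) (snd p + r0)
                    + Irect P Q (fst q - r1) (fst q + r1) (snd q - r1) (snd q + r1).
Proof.
  intros HF H0 H1 Hd Hr0 Hr1. intros.
  destruct Hd as [Hd|Hd].
  - destruct (Rle_or_lt 0 (fst p - fst q)) as [s|s].
    + rewrite Rabs_right in Hd by lra.
      rewrite Rplus_comm. apply two_x; auto. apply cform_sym; auto. lra.
    + rewrite Rabs_left in Hd by lra. apply two_x; auto. lra.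
  - destruct (Rle_or_lt 0 (snd p - snd q)) as [s|s].
    + rewrite Rabs_right in Hd by lra.
      rewrite Rplus_comm. apply two_y; auto. apply cform_sym; auto. lra.
    + rewrite Rabs_left in Hd by lra. apply two_y; auto. lra.
Qed.


Definition S (w : B) := Rabs (b0 w) + Rabs (b1 w) + Rabs (b2 w) + Rabs (b3 w).

Lemma abs_le_mod a b : Rabs a <= Ci_mod (a, b).
Proof.
  unfold Ci_mod; simpl. rewrite <- sqrt_Rsqr_abs. apply sqrt_le_1_alt.
  unfold Rsqr. nra.
Qed.
Lemma abs_le_mod' a b : Rabs b <= Ci_mod (a, b).
Proof.
  unfold Ci_mod; simpl. rewrite <- sqrt_Rsqr_abs. apply sqrt_le_1_alt.
  unfold Rsqr. nra.
Qed.
Lemma mod_le_abs a b : Ci_mod (a, b) <= Rabs a + Rabs b.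
Proof.
  unfold Ci_mod; simpl. rewrite <- (sqrt_Rsqr (Rabs a + Rabs b)).
  2: { assert (0 <= Rabs a) by apply Rabs_pos. assert (0 <= Rabs b) by apply Rabs_pos. lra. }
  apply sqrt_le_1_alt. unfold Rsqr.
  assert (0 <= Rabs a) by apply Rabs_pos. assert (0 <= Rabs b) by apply Rabs_pos.
  assert (a * a = Rabs a * Rabs a) by (rewrite <- Rabs_mult; rewrite Rabs_right; nra).
  assert (b * b = Rabs b * Rabs b) by (rewrite <- Rabs_mult; rewrite Rabs_right; nra).
  nra.
Qed.

Lemma Bnorm_eq w : Bnorm w = (Ci_mod (b0 w + b3 w, b1 w - b2 w) + Ci_mod (b0 w - b3 w, b1 w + b2 w)) / 2.
Proof.
  unfold Bnorm, Bplus, Bminus, Ci_sub, Ci_add, Ci_mul_i, Sc, Vec; simpl.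
  do 4 f_equal; ring.
Qed.

Lemma comps_le_Bnorm w : Rabs (b0 w) <= Bnorm w /\ Rabs (b1 w) <= Bnorm w /\
  Rabs (b2 w) <= Bnorm w /\ Rabs (b3 w) <= Bnorm w.
Proof.
  rewrite Bnorm_eq.
  pose proof (abs_le_mod (b0 w + b3 w) (b1 w - b2 w)).
  pose proof (abs_le_mod' (b0 w + b3 w) (b1 w - b2 w)).
  pose proof (abs_le_mod (b0 w - b3 w) (b1 w + b2 w)).
  pose proof (abs_le_mod' (b0 w - b3 w) (b1 w + b2 w)).
  set (m1 := Ci_mod _) in *. set (m2 := Ci_mod _) in *.
  repeat split;
  repeat match goal with H : Rabs ?x <= _ |- _ => revert H end;
  unfold Rabs; repeat destruct Rcase_abs; intros; lra.
Qed.

Lemma Bnorm_le_S w : Bnorm w <= S w.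
Proof.
  rewrite Bnorm_eq. unfold S.
  pose proof (mod_le_abs (b0 w + b3 w) (b1 w - b2 w)).
  pose proof (mod_le_abs (b0 w - b3 w) (b1 w + b2 w)).
  set (m1 := Ci_mod _) in *. set (m2 := Ci_mod _) in *.
  revert H H0. unfold Rabs; repeat destruct Rcase_abs; intros; lra.
Qed.

Lemma S_le_Bnorm w : S w <= 4 * Bnorm w.
Proof. unfold S. pose proof (comps_le_Bnorm w). lra. Qed.

Lemma S_pos w : 0 <= S w.
Proof. unfold S. pose proof (Rabs_pos (b0 w)). pose proof (Rabs_pos (b1 w)).
  pose proof (Rabs_pos (b2 w)). pose proof (Rabs_pos (b3 w)). lra. Qed.

Lemma comps_le_S w : Rabs (b0 w) <= S w /\ Rabs (b1 w) <= S w /\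
  Rabs (b2 w) <= S w /\ Rabs (b3 w) <= S w.
Proof. unfold S. pose proof (Rabs_pos (b0 w)). pose proof (Rabs_pos (b1 w)).
  pose proof (Rabs_pos (b2 w)). pose proof (Rabs_pos (b3 w)). lra. Qed.

Lemma abs4 a b c d : Rabs (a - b - c + d) <= Rabs a + Rabs b + Rabs c + Rabs d.
Proof. unfold Rabs; repeat destruct Rcase_abs; lra. Qed.
Lemma abs4' a b c d : Rabs (a + b - c - d) <= Rabs a + Rabs b + Rabs c + Rabs d.
Proof. unfold Rabs; repeat destruct Rcase_abs; lra. Qed.
Lemma abs4'' a b c d : Rabs (a + b + c + d) <= Rabs a + Rabs b + Rabs c + Rabs d.
Proof. unfold Rabs; repeat destruct Rcase_abs; lra. Qed.

Lemma S_mul x y : S (Bmul x y) <= S x * S y.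
Proof.
  destruct x as [x0 x1 x2 x3], y as [y0 y1 y2 y3]. unfold S, Bmul; simpl.
  pose proof (abs4 (x0*y0) (x1*y1) (x2*y2) (x3*y3)).
  pose proof (abs4' (x0*y1) (x1*y0) (x2*y3) (x3*y2)).
  pose proof (abs4' (x0*y2) (x2*y0) (x1*y3) (x3*y1)).
  pose proof (abs4'' (x0*y3) (x3*y0) (x1*y2) (x2*y1)).
  repeat rewrite Rabs_mult in *. nra.
Qed.

Lemma S_add x y : S (Badd x y) <= S x + S y.
Proof.
  destruct x as [x0 x1 x2 x3], y as [y0 y1 y2 y3]. unfold S, Badd; simpl.
  pose proof (Rabs_triang x0 y0). pose proof (Rabs_triang x1 y1).
  pose proof (Rabs_triang x2 y2). pose proof (Rabs_triang x3 y3). lra.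
Qed.

Lemma S_sub x y : S (Bsub x y) <= S x + S y.
Proof.
  destruct x as [x0 x1 x2 x3], y as [y0 y1 y2 y3]. unfold S, Bsub, Badd, Bopp; simpl.
  pose proof (Rabs_triang x0 (-y0)). pose proof (Rabs_triang x1 (-y1)).
  pose proof (Rabs_triang x2 (-y2)). pose proof (Rabs_triang x3 (-y3)).
  rewrite !Rabs_Ropp in *. lra.
Qed.

Lemma zdiff z z0 : Bsub (zB z) (zB z0) = mkB (fst z - fst z0) 0 (snd z - snd z0) 0.
Proof. unfold Bsub, Badd, Bopp, zB; simpl. f_equal; ring. Qed.

Lemma Pdist_le z w : Pdist z w <= Rabs (fst z - fst w) + Rabs (snd z - snd w).
Proof.
  unfold Pdist. rewrite zdiff. eapply Rle_trans. apply Bnorm_le_S.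
  unfold S; simpl. rewrite Rabs_R0. lra.
Qed.

Lemma Pabs_ge z : Rabs (fst z) <= Pabs z /\ Rabs (snd z) <= Pabs z.
Proof. unfold Pabs. pose proof (comps_le_Bnorm (zB z)). simpl in H. tauto. Qed.

Definition winv (u v : R) : B := mkB (u / (u*u+v*v)) 0 (- v / (u*u+v*v)) 0.

Lemma winv_mul u v X : u*u+v*v <> 0 -> Bmul (winv u v) (Bmul (mkB u 0 v 0) X) = X.
Proof.
  intros H. destruct X as [x0 x1 x2 x3]. unfold winv, Bmul; simpl. f_equal; field; auto.
Qed.

Lemma S_winv u v r : 0 < r -> Rabs u <= r -> Rabs v <= r -> (Rabs u = r \/ Rabs v = r) ->
  S (winv u v) <= 2 / r.
Proof.
  intros Hr Hu Hv Huv.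
  assert (Hs : r * r <= u*u+v*v).
  { assert (u*u = Rabs u * Rabs u) by (rewrite <- Rabs_mult; rewrite Rabs_right; nra).
    assert (v*v = Rabs v * Rabs v) by (rewrite <- Rabs_mult; rewrite Rabs_right; nra).
    destruct Huv as [E|E]; rewrite E in *; nra. }
  assert (Hp : 0 < u*u+v*v) by nra.
  unfold S, winv; simpl. rewrite Rabs_R0.
  unfold Rdiv. rewrite !Rabs_mult, Rabs_Ropp. rewrite (Rabs_right (/ _)).
  2: { apply Rle_ge. left. apply Rinv_0_lt_compat. lra. }
  assert (Hi : / (u*u+v*v) <= / (r*r)) by (apply Rinv_le_contravar; nra).
  assert (0 <= Rabs u) by apply Rabs_pos. assert (0 <= Rabs v) by apply Rabs_pos.
  assert (0 < / (u*u+v*v)) by (apply Rinv_0_lt_compat; lra).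
  apply Rle_trans with ((Rabs u + Rabs v) * / (r * r)). nra.
  apply Rle_trans with (2 * r * / (r*r)). apply Rmult_le_compat_r.
  left; apply Rinv_0_lt_compat; nra. lra.
  right. field. lra.
Qed.


Lemma closed_id a b d dx dy v vx vy :
  dbar_of dx dy = Badd (Bmul a d) (Bmul b (Bconj d)) ->
  dbar_of vx vy = Badd (Bmul (Bopp a) v) (Bmul (Bopp (Bconj b)) (Bconj v)) ->
  b2 (Badd (Bmul dy v) (Bmul d vy)) = b0 (Badd (Bmul dx v) (Bmul d vx)).
Proof.
  destruct a as [a0 a1 a2 a3], b as [c0 c1 c2 c3], d as [d0 d1 d2 d3],
    dx as [p0 p1 p2 p3], dy as [q0 q1 q2 q3], v as [v0 v1 v2 v3],
    vx as [s0 s1 s2 s3], vy as [t0 t1 t2 t3].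
  unfold dbar_of, Bscal, Badd, Bmul, Bconj, Bopp, Bj; simpl.
  intros H1 H2. injection H1 as E0 E1 E2 E3. injection H2 as F0 F1 F2 F3.
  assert (p0 = q2 + 2 * (a0 * d0 - a1 * d1 - a2 * d2 + a3 * d3 + (c0 * d0 - c1 * d1 - c2 * - d2 + c3 * - d3))) by lra.
  assert (p1 = q3 + 2 * (a0 * d1 + a1 * d0 - a2 * d3 - a3 * d2 + (c0 * d1 + c1 * d0 - c2 * - d3 - c3 * - d2))) by lra.
  assert (p2 = - q0 + 2 * (a0 * d2 + a2 * d0 - a1 * d3 - a3 * d1 + (c0 * - d2 + c2 * d0 - c1 * - d3 - c3 * d1))) by lra.
  assert (p3 = - q1 + 2 * (a0 * d3 + a3 * d0 + a1 * d2 + a2 * d1 + (c0 * - d3 + c3 * d0 + c1 * - d2 + c2 * d1))) by lra.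
  assert (s0 = t2 + 2 * (- a0 * v0 - - a1 * v1 - - a2 * v2 + - a3 * v3 + (- c0 * v0 - - c1 * v1 - - - c2 * - v2 + - - c3 * - v3))) by lra.
  assert (s1 = t3 + 2 * (- a0 * v1 + - a1 * v0 - - a2 * v3 - - a3 * v2 + (- c0 * v1 + - c1 * v0 - - - c2 * - v3 - - - c3 * - v2))) by lra.
  assert (s2 = - t0 + 2 * (- a0 * v2 + - a2 * v0 - - a1 * v3 - - a3 * v1 + (- c0 * - v2 + - - c2 * v0 - - c1 * - v3 - - - c3 * v1))) by lra.
  assert (s3 = - t1 + 2 * (- a0 * v3 + - a3 * v0 + - a1 * v2 + - a2 * v1 + (- c0 * - v3 + - - c3 * v0 + - c1 * - v2 + - - c2 * v1))) by lra.
  subst p0 p1 p2 p3 s0 s1 s2 s3. ring.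
Qed.

Ltac comps_cases Hc := simpl in Hc; destruct Hc as [<-|[<-|[<-|[<-|[]]]]].

Ltac dtac := match goal with
 | |- is_derive (fun t => _ + _) _ _ => apply dR_plus; dtac
 | |- is_derive (fun t => _ - _) _ _ => apply dR_minus; dtac
 | |- is_derive (fun t => _ * _) _ _ => apply dR_mult; dtac
 | |- _ => eassumption
 end.
Ltac ctac := match goal with
 | |- continuity_2d_pt (fun u v => _ + _) _ _ => apply continuity_2d_pt_plus; ctac
 | |- continuity_2d_pt (fun u v => _ - _) _ _ => apply continuity_2d_pt_minus; ctac
 | |- continuity_2d_pt (fun u v => _ * _) _ _ => apply continuity_2d_pt_mult; ctac
 | |- _ => assumption
 end.

Lemma dB_mul (f g : R -> B) x df dg :
  (forall c, In c comps -> is_derive (fun t => c (f t)) x (c df)) ->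
  (forall c, In c comps -> is_derive (fun t => c (g t)) x (c dg)) ->
  forall c, In c comps -> is_derive (fun t => c (Bmul (f t) (g t))) x
                              (c (Badd (Bmul df (g x)) (Bmul (f x) dg))).
Proof.
  intros Hf Hg c Hc.
  assert (F0 := Hf b0 ltac:(simpl; tauto)). assert (F1 := Hf b1 ltac:(simpl; tauto)).
  assert (F2 := Hf b2 ltac:(simpl; tauto)). assert (F3 := Hf b3 ltac:(simpl; tauto)).
  assert (G0 := Hg b0 ltac:(simpl; tauto)). assert (G1 := Hg b1 ltac:(simpl; tauto)).
  assert (G2 := Hg b2 ltac:(simpl; tauto)). assert (G3 := Hg b3 ltac:(simpl; tauto)).
  comps_cases Hc;
  (eapply dR_ext; [intro; reflexivity| |]; [|cbn; dtac]; cbn; ring).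
Qed.

Definition cB (f : Pt -> B) (z : Pt) : Prop :=
  forall c, In c comps -> continuity_2d_pt (fun u v => c (f (u,v))) (fst z) (snd z).

Lemma cB_mul f g z : cB f z -> cB g z -> cB (fun w => Bmul (f w) (g w)) z.
Proof.
  intros Hf Hg c Hc.
  assert (F0 := Hf b0 ltac:(simpl; tauto)). assert (F1 := Hf b1 ltac:(simpl; tauto)).
  assert (F2 := Hf b2 ltac:(simpl; tauto)). assert (F3 := Hf b3 ltac:(simpl; tauto)).
  assert (G0 := Hg b0 ltac:(simpl; tauto)). assert (G1 := Hg b1 ltac:(simpl; tauto)).
  assert (G2 := Hg b2 ltac:(simpl; tauto)). assert (G3 := Hg b3 ltac:(simpl; tauto)).
  comps_cases Hc; cbn; ctac.
Qed.

Lemma cB_add f g z : cB f z -> cB g z -> cB (fun w => Badd (f w) (g w)) z.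
Proof.
  intros Hf Hg c Hc.
  assert (F0 := Hf b0 ltac:(simpl; tauto)). assert (F1 := Hf b1 ltac:(simpl; tauto)).
  assert (F2 := Hf b2 ltac:(simpl; tauto)). assert (F3 := Hf b3 ltac:(simpl; tauto)).
  assert (G0 := Hg b0 ltac:(simpl; tauto)). assert (G1 := Hg b1 ltac:(simpl; tauto)).
  assert (G2 := Hg b2 ltac:(simpl; tauto)). assert (G3 := Hg b3 ltac:(simpl; tauto)).
  comps_cases Hc; cbn; apply continuity_2d_pt_plus; assumption.
Qed.

Lemma comp_sub c a b : In c comps -> c (Bsub a b) = c a - c b.
Proof. intros Hc; comps_cases Hc; reflexivity. Qed.

Lemma comp_le c w : In c comps -> Rabs (c w) <= Bnorm w.
Proof. intros Hc. pose proof (comps_le_Bnorm w). comps_cases Hc; tauto. Qed.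

Lemma box_avoid z z0 : z <> z0 -> exists d, 0 < d /\
  forall u v, Rabs (u - fst z) < d -> Rabs (v - snd z) < d -> (u,v) <> z0.
Proof.
  intros H. destruct z as [x y], z0 as [x0 y0]; simpl.
  destruct (Req_dec x x0) as [E|E].
  - subst. assert (y <> y0) by (intro; subst; auto).
    exists (Rabs (y - y0)). split. apply Rabs_pos_lt; lra.
    intros u v Hu Hv E'. injection E' as -> ->.
    rewrite Rabs_minus_sym in Hv. lra.
  - exists (Rabs (x - x0)). split. apply Rabs_pos_lt; lra.
    intros u v Hu Hv E'. injection E' as -> ->.
    rewrite Rabs_minus_sym in Hu. lra.
Qed.

Lemma pd_small u v x y d : Rabs (u - x) < d / 2 -> Rabs (v - y) < d / 2 -> Pdist (u,v) (x,y) < d.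
Proof. intros. eapply Rle_lt_trans. apply Pdist_le. simpl. lra. Qed.

Lemma cB_of_cw U f z : cont_within U f z ->
  (exists d, 0 < d /\ forall u v, Rabs (u - fst z) < d -> Rabs (v - snd z) < d -> U (u,v)) ->
  cB f z.
Proof.
  intros Hc [d [Hd HU]] c Hcc eps.
  destruct (Hc eps (cond_pos eps)) as [d1 [Hd1 H1]].
  assert (Hm : 0 < Rmin d (d1/2)) by (apply Rmin_pos; lra).
  exists (mkposreal _ Hm). simpl. intros u v Hu Hv.
  assert (Hu1 : Rabs (u - fst z) < d) by (eapply Rlt_le_trans; [exact Hu| apply Rmin_l]).
  assert (Hv1 : Rabs (v - snd z) < d) by (eapply Rlt_le_trans; [exact Hv| apply Rmin_l]).
  assert (Hu2 : Rabs (u - fst z) < d1/2) by (eapply Rlt_le_trans; [exact Hu| apply Rmin_r]).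
  assert (Hv2 : Rabs (v - snd z) < d1/2) by (eapply Rlt_le_trans; [exact Hv| apply Rmin_r]).
  destruct z as [x y]; simpl in *.
  rewrite <- comp_sub by auto. eapply Rle_lt_trans. apply comp_le; auto.
  apply H1. apply HU; auto. apply pd_small; auto.
Qed.


Lemma bound_near U f z c : In c comps -> cont_within U f z ->
  exists d, 0 < d /\ forall w, U w -> Pdist w z < d -> Rabs (c (f w)) <= Rabs (c (f z)) + 1.
Proof.
  intros Hc H. destruct (H 1 Rlt_0_1) as [d [Hd H1]]. exists d. split; auto.
  intros w Uw Hw. specialize (H1 w Uw Hw).
  assert (Rabs (c (f w) - c (f z)) < 1).
  { rewrite <- comp_sub by auto. eapply Rle_lt_trans; [apply comp_le; auto|exact H1]. }
  pose proof (Rabs_triang_inv (c (f w)) (c (f z))). lra.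
Qed.

Lemma cont_of_der (h : R -> R) t dh : is_derive h t dh -> continuity_pt h t.
Proof. intros H. apply continuity_pt_filterlim. apply (ex_derive_continuous (K:=R_AbsRing) h).
  eexists; exact H. Qed.

Lemma mvt_bound (h dh : R -> R) a b K :
  (forall t, Rmin a b <= t <= Rmax a b -> is_derive h t (dh t) /\ Rabs (dh t) <= K) ->
  Rabs (h b - h a) <= K * Rabs (b - a).
Proof.
  intros H.
  destruct (MVT_gen h a b dh) as [xi [Hxi E]].
  - intros t Ht. apply H. lra.
  - intros t Ht. apply (cont_of_der h t (dh t)). apply H. exact Ht.
  - rewrite E, Rabs_mult. apply Rmult_le_compat_r. apply Rabs_pos. apply H. exact Hxi.
Qed.

Lemma in_mm_abs a b t : Rmin a b <= t <= Rmax a b -> Rabs (t - a) <= Rabs (b - a).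
Proof. unfold Rmin, Rmax, Rabs. repeat destruct Rle_dec; repeat destruct Rcase_abs; lra. Qed.

Lemma cB_of_pd U W Wx Wy z :
  (exists d, 0 < d /\ forall u v, Rabs (u - fst z) < d -> Rabs (v - snd z) < d -> U (u,v)) ->
  (forall w, U w -> is_pdx W w (Wx w) /\ is_pdy W w (Wy w)) ->
  cont_within U Wx z -> cont_within U Wy z -> cB W z.
Proof.
  intros [d [Hd HU]] H Hcx Hcy c Hc eps.
  destruct (bound_near U Wx z c Hc Hcx) as [d1 [Hd1 H1]].
  destruct (bound_near U Wy z c Hc Hcy) as [d2 [Hd2 H2]].
  set (K1 := Rabs (c (Wx z)) + 1). set (K2 := Rabs (c (Wy z)) + 1).
  assert (HK1 : 1 <= K1) by (unfold K1; pose proof (Rabs_pos (c (Wx z))); lra).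
  assert (HK2 : 1 <= K2) by (unfold K2; pose proof (Rabs_pos (c (Wy z))); lra).
  set (rho := Rmin (Rmin d (Rmin (d1/2) (d2/2))) (eps / (2 * (K1 + K2)))).
  assert (Hrho : 0 < rho).
  { unfold rho. repeat apply Rmin_pos; try lra.
    apply Rdiv_lt_0_compat. apply cond_pos. lra. }
  assert (R1 : rho <= d) by (unfold rho; eapply Rle_trans; [apply Rmin_l|apply Rmin_l]).
  assert (R2 : rho <= d1/2) by (unfold rho; eapply Rle_trans; [apply Rmin_l|];
     eapply Rle_trans; [apply Rmin_r|apply Rmin_l]).
  assert (R3 : rho <= d2/2) by (unfold rho; eapply Rle_trans; [apply Rmin_l|];
     eapply Rle_trans; [apply Rmin_r|apply Rmin_r]).
  assert (R4 : rho <= eps / (2 * (K1 + K2))) by (unfold rho; apply Rmin_r).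
  exists (mkposreal _ Hrho). simpl. intros u v Hu Hv.
  destruct z as [x y]; simpl in *.
  assert (A1 : Rabs (c (W (u,v)) - c (W (x,v))) <= K1 * Rabs (u - x)).
  { apply (mvt_bound (fun t => c (W (t,v))) (fun t => c (Wx (t,v)))).
    intros t Ht. pose proof (in_mm_abs _ _ _ Ht).
    assert (Ut : U (t,v)) by (apply HU; lra). split.
    - apply (H (t,v) Ut). exact Hc.
    - apply H1; auto. apply pd_small; lra. }
  assert (A2 : Rabs (c (W (x,v)) - c (W (x,y))) <= K2 * Rabs (v - y)).
  { apply (mvt_bound (fun t => c (W (x,t))) (fun t => c (Wy (x,t)))).
    intros t Ht. pose proof (in_mm_abs _ _ _ Ht).
    assert (Ut : U (x,t)) by (apply HU; rewrite ?Rminus_eq_0, ?Rabs_R0; lra). split.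
    - apply (H (x,t) Ut). exact Hc.
    - apply H2; auto. apply pd_small; rewrite ?Rminus_eq_0, ?Rabs_R0; lra. }
  replace (c (W (u,v)) - c (W (x,y))) with ((c (W (u,v)) - c (W (x,v))) + (c (W (x,v)) - c (W (x,y)))) by ring.
  eapply Rle_lt_trans. apply Rabs_triang.
  assert (K1 * Rabs (u - x) + K2 * Rabs (v - y) <= (K1 + K2) * rho) by nra.
  assert ((K1 + K2) * rho <= eps / 2).
  { apply Rle_trans with ((K1 + K2) * (eps / (2 * (K1 + K2)))). nra.
    right. field. lra. }
  pose proof (cond_pos eps). lra.
Qed.


Lemma box_punct z z0 : z <> z0 ->
  exists d, 0 < d /\ forall u v, Rabs (u - fst z) < d -> Rabs (v - snd z) < d -> punctured z0 (u,v).
Proof. apply box_avoid. Qed.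

Lemma sol_cB A Bc z0 W z : is_solution_on A Bc (punctured z0) W -> z <> z0 -> cB W z.
Proof.
  intros [Wx [Wy H]] N. apply (cB_of_pd (punctured z0) W Wx Wy z).
  - apply box_punct; auto.
  - intros w Hw. split; apply H; auto.
  - apply H; auto.
  - apply H; auto.
Qed.

Lemma cform_F a b ad bd D V z0 z1 :
  (forall z, ad z = Bopp (a z) /\ bd z = Bopp (Bconj (b z))) ->
  is_solution_on a b (punctured z0) D -> is_solution_on ad bd (punctured z1) V ->
  cform z0 z1 (fun x y => b2 (Bmul (D (x,y)) (V (x,y))))
              (fun x y => b0 (Bmul (D (x,y)) (V (x,y)))).
Proof.
  intros Had HsD HsV.
  pose proof HsD as [Dx [Dy HD]]. pose proof HsV as [Vx [Vy HV]].
  set (Fx := fun w => Badd (Bmul (Dx w) (V w)) (Bmul (D w) (Vx w))).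
  set (Fy := fun w => Badd (Bmul (Dy w) (V w)) (Bmul (D w) (Vy w))).
  exists (fun x y => b2 (Fx (x,y))), (fun x y => b2 (Fy (x,y))),
         (fun x y => b0 (Fx (x,y))), (fun x y => b0 (Fy (x,y))).
  intros x y [N0 N1].
  destruct (HD (x,y) N0) as [D1 [D2 [D3 [D4 D5]]]].
  destruct (HV (x,y) N1) as [V1 [V2 [V3 [V4 V5]]]].
  assert (cDx : cB Dx (x,y)) by (apply (cB_of_cw (punctured z0)); auto; apply box_punct; auto).
  assert (cDy : cB Dy (x,y)) by (apply (cB_of_cw (punctured z0)); auto; apply box_punct; auto).
  assert (cVx : cB Vx (x,y)) by (apply (cB_of_cw (punctured z1)); auto; apply box_punct; auto).
  assert (cVy : cB Vy (x,y)) by (apply (cB_of_cw (punctured z1)); auto; apply box_punct; auto).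
  assert (cD : cB D (x,y)) by (eapply sol_cB; eauto).
  assert (cV : cB V (x,y)) by (eapply sol_cB; eauto).
  assert (cFx : cB Fx (x,y)) by (apply cB_add; apply cB_mul; auto).
  assert (cFy : cB Fy (x,y)) by (apply cB_add; apply cB_mul; auto).
  split; [|split; [|split; [|split; [|split; [|split]]]]].
  - exact (dB_mul (fun t => D (t,y)) (fun t => V (t,y)) x (Dx (x,y)) (Vx (x,y)) D1 V1 b2 ltac:(simpl; tauto)).
  - exact (dB_mul (fun t => D (x,t)) (fun t => V (x,t)) y (Dy (x,y)) (Vy (x,y)) D2 V2 b2 ltac:(simpl; tauto)).
  - exact (dB_mul (fun t => D (t,y)) (fun t => V (t,y)) x (Dx (x,y)) (Vx (x,y)) D1 V1 b0 ltac:(simpl; tauto)).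
  - exact (dB_mul (fun t => D (x,t)) (fun t => V (x,t)) y (Dy (x,y)) (Vy (x,y)) D2 V2 b0 ltac:(simpl; tauto)).
  - exact (cFx b0 ltac:(simpl; tauto)).
  - exact (cFy b2 ltac:(simpl; tauto)).
  - unfold Fx, Fy. destruct (Had (x,y)) as [E1 E2]. rewrite E1, E2 in V5.
    eapply closed_id; eauto.
Qed.


Definition onb px py r x y := Rabs (x - px) <= r /\ Rabs (y - py) <= r /\
  (Rabs (x - px) = r \/ Rabs (y - py) = r).

Definition EI (P Q : R -> R -> R) A B C D :=
  ex_RInt (fun x => P x C) A B /\ ex_RInt (fun x => P x D) A B /\
  ex_RInt (fun y => Q A y) C D /\ ex_RInt (fun y => Q B y) C D.

Lemma onb_edges px py r : 0 < r ->
  (forall x, px - r <= x <= px + r -> onb px py r x (py - r) /\ onb px py r x (py + r)) /\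
  (forall y, py - r <= y <= py + r -> onb px py r (px - r) y /\ onb px py r (px + r) y).
Proof.
  intros Hr. unfold onb.
  replace (py - r - py) with (- r) by ring. replace (py + r - py) with r by ring.
  replace (px - r - px) with (- r) by ring. replace (px + r - px) with r by ring.
  rewrite Rabs_Ropp, Rabs_right by lra.
  split; intros t Ht; split; (split; [|split]); try (apply Rabs_le; lra); try lra; try (left; reflexivity); try (right; reflexivity).
Qed.

Lemma EI_sq p q P Q px py r : cform p q P Q -> 0 < r ->
  (forall x y, onb px py r x y -> nb p q x y) ->
  EI P Q (px - r) (px + r) (py - r) (py + r).
Proof.
  intros HF Hr HN. destruct (onb_edges px py r Hr) as [E1 E2].
  repeat split.
  - eapply exR_h; [exact HF|]. intros x Hx. apply in_mm in Hx; [|lra]. apply HN, E1; auto.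
  - eapply exR_h; [exact HF|]. intros x Hx. apply in_mm in Hx; [|lra]. apply HN, E1; auto.
  - eapply exR_v; [exact HF|]. intros x Hx. apply in_mm in Hx; [|lra]. apply HN, E2; auto.
  - eapply exR_v; [exact HF|]. intros x Hx. apply in_mm in Hx; [|lra]. apply HN, E2; auto.
Qed.

Lemma Irect_sq_bound P Q px py r K : 0 < r -> EI P Q (px - r) (px + r) (py - r) (py + r) ->
  (forall x y, onb px py r x y -> Rabs (P x y) <= K /\ Rabs (Q x y) <= K) ->
  Rabs (Irect P Q (px - r) (px + r) (py - r) (py + r)) <= 8 * r * K.
Proof.
  intros Hr [I1 [I2 [I3 I4]]] HK. destruct (onb_edges px py r Hr) as [E1 E2].
  assert (B1 := abs_RInt_le_const (fun x => P x (py - r)) (px - r) (px + r) K ltac:(lra) I1 ltac:(intros t Ht; exact (proj1 (HK _ _ (proj1 (E1 t Ht)))))).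
  assert (B2 := abs_RInt_le_const (fun x => P x (py + r)) (px - r) (px + r) K ltac:(lra) I2 ltac:(intros t Ht; exact (proj1 (HK _ _ (proj2 (E1 t Ht)))))).
  assert (B3 := abs_RInt_le_const (fun y => Q (px - r) y) (py - r) (py + r) K ltac:(lra) I3 ltac:(intros t Ht; exact (proj2 (HK _ _ (proj1 (E2 t Ht)))))).
  assert (B4 := abs_RInt_le_const (fun y => Q (px + r) y) (py - r) (py + r) K ltac:(lra) I4 ltac:(intros t Ht; exact (proj2 (HK _ _ (proj2 (E2 t Ht)))))).
  unfold Irect.
  set (a1 := RInt _ _ _) in *. set (a2 := RInt _ _ _) in *.
  set (a3 := RInt _ _ _) in *. set (a4 := RInt _ _ _) in *.
  revert B1 B2 B3 B4. unfold Rabs. repeat destruct Rcase_abs; intros; lra.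
Qed.

Lemma EI_minus P Q P' Q' A B C D : EI P Q A B C D -> EI P' Q' A B C D ->
  EI (fun x y => P x y - P' x y) (fun x y => Q x y - Q' x y) A B C D.
Proof.
  intros [I1 [I2 [I3 I4]]] [J1 [J2 [J3 J4]]].
  repeat split; apply (ex_RInt_minus (V:=R_NormedModule)); auto.
Qed.

Lemma Irect_minus P Q P' Q' A B C D : EI P Q A B C D -> EI P' Q' A B C D ->
  Irect (fun x y => P x y - P' x y) (fun x y => Q x y - Q' x y) A B C D
  = Irect P Q A B C D - Irect P' Q' A B C D.
Proof.
  intros [I1 [I2 [I3 I4]]] [J1 [J2 [J3 J4]]]. unfold Irect.
  rewrite (RInt_minus (fun x => P x C) (fun x => P' x C)) by auto.
  rewrite (RInt_minus (fun x => P x D) (fun x => P' x D)) by auto.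
  rewrite (RInt_minus (fun y => Q A y) (fun y => Q' A y)) by auto.
  rewrite (RInt_minus (fun y => Q B y) (fun y => Q' B y)) by auto.
  unfold minus, plus, opp; simpl. ring.
Qed.

Lemma edge_int k s p r : 0 < r ->
  RInt (fun x => (s * (x - p) + k * r) / ((x - p) * (x - p) + r * r)) (p - r) (p + r)
  = 2 * k * atan 1.
Proof.
  intros Hr.
  assert (Hpos : forall x, 0 < (x - p) * (x - p) + r * r).
  { intro x. pose proof (Rle_0_sqr (x - p)). unfold Rsqr in *. pose proof (Rmult_lt_0_compat r r Hr Hr). lra. }
  apply is_RInt_unique.
  set (f := fun x => s * ln ((x - p) * (x - p) + r * r) / 2 + k * atan ((x - p) / r)).
  replace (2 * k * atan 1) with (minus (f (p + r)) (f (p - r))).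
  - apply (is_RInt_derive (V:=R_CompleteNormedModule) f).
    + intros x _. unfold f. auto_derive.
      * pose proof (Hpos x); lra.
      * pose proof (Hpos x).
        assert (E : 1 + (x + - p) * / r * ((x + - p) * / r * 1) = ((x-p)*(x-p)+r*r)/(r*r))
          by (field; lra).
        rewrite E. field. lra.
    + intros x _. apply (ex_derive_continuous (K:=R_AbsRing) (V:=R_NormedModule) (fun x0 => (s * (x0 - p) + k * r) / ((x0 - p) * (x0 - p) + r * r))). auto_derive. pose proof (Hpos x); lra.
  - unfold f, minus, plus, opp; simpl.
    replace (p + r - p) with r by ring. replace (p - r - p) with (- r) by ring.
    replace (- r * - r) with (r * r) by ring.
    replace (r / r) with 1 by (field; lra). replace (- r / r) with (- 1) by (field; lra).
    assert (Ea : atan (-1) = - atan 1) by (rewrite <- atan_opp; f_equal; lra).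
    rewrite Ea. ring.
Qed.


Lemma den_ne u r : 0 < r -> u * u + r * r <> 0.
Proof. intros Hr. pose proof (Rle_0_sqr u). unfold Rsqr in *. pose proof (Rmult_lt_0_compat r r Hr Hr). lra. Qed.

Lemma main_term c px py r : 0 < r ->
  Irect (fun x y => b2 (Bmul (winv (x - px) (y - py)) c))
        (fun x y => b0 (Bmul (winv (x - px) (y - py)) c))
        (px - r) (px + r) (py - r) (py + r) = 8 * b0 c * atan 1.
Proof.
  intros Hr. destruct c as [c0 c1 c2 c3].
  assert (E1 : RInt (fun x => b2 (Bmul (winv (x - px) (py - r - py)) (mkB c0 c1 c2 c3))) (px - r) (px + r)
               = 2 * c0 * atan 1).
  { rewrite <- (edge_int c0 c2 px r Hr). apply RInt_ext. intros x _.
    unfold winv, Bmul; simpl. replace (py - r - py) with (- r) by ring.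
    pose proof (den_ne (x - px) r Hr). field. replace (- r * - r) with (r * r) by ring. auto. }
  assert (E2 : RInt (fun x => b2 (Bmul (winv (x - px) (py + r - py)) (mkB c0 c1 c2 c3))) (px - r) (px + r)
               = 2 * - c0 * atan 1).
  { rewrite <- (edge_int (- c0) c2 px r Hr). apply RInt_ext. intros x _.
    unfold winv, Bmul; simpl. replace (py + r - py) with r by ring.
    pose proof (den_ne (x - px) r Hr). field. auto. }
  assert (E3 : RInt (fun y => b0 (Bmul (winv (px - r - px) (y - py)) (mkB c0 c1 c2 c3))) (py - r) (py + r)
               = 2 * - c0 * atan 1).
  { rewrite <- (edge_int (- c0) c2 py r Hr). apply RInt_ext. intros y _.
    unfold winv, Bmul; simpl. replace (px - r - px) with (- r) by ring.
    pose proof (den_ne (y - py) r Hr). field. replace (- r * - r + (y - py) * (y - py)) with ((y - py) * (y - py) + r * r) by ring. auto. }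
  assert (E4 : RInt (fun y => b0 (Bmul (winv (px + r - px) (y - py)) (mkB c0 c1 c2 c3))) (py - r) (py + r)
               = 2 * c0 * atan 1).
  { rewrite <- (edge_int c0 c2 py r Hr). apply RInt_ext. intros y _.
    unfold winv, Bmul; simpl. replace (px + r - px) with r by ring.
    pose proof (den_ne (y - py) r Hr). field. replace (r * r + (y - py) * (y - py)) with ((y - py) * (y - py) + r * r) by ring. auto. }
  unfold Irect. cbv beta. rewrite E1, E2, E3, E4. simpl. ring.
Qed.


Definition KS (W : Pt -> B) z0 al := forall eps, 0 < eps -> exists del, 0 < del /\
  forall z, z <> z0 -> Pdist z z0 < del ->
    S (Bsub (Bmul (Bsub (zB z) (zB z0)) (W z)) al) < eps.
Definition BS (W : Pt -> B) := exists M R0, forall z, R0 < Pabs z -> Pabs z * S (W z) <= M.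

Lemma S_tri x y : S x <= S y + S (Bsub x y).
Proof.
  destruct x as [x0 x1 x2 x3], y as [y0 y1 y2 y3]. unfold S, Bsub, Badd, Bopp; simpl.
  pose proof (Rabs_triang y0 (x0 + - y0)). pose proof (Rabs_triang y1 (x1 + - y1)).
  pose proof (Rabs_triang y2 (x2 + - y2)). pose proof (Rabs_triang y3 (x3 + - y3)).
  replace (y0 + (x0 + - y0)) with x0 in * by ring. replace (y1 + (x1 + - y1)) with x1 in * by ring.
  replace (y2 + (x2 + - y2)) with x2 in * by ring. replace (y3 + (x3 + - y3)) with x3 in * by ring.
  lra.
Qed.

Lemma S_sub0 X : S (Bsub X Bzero) = S X.
Proof. destruct X. unfold S, Bsub, Badd, Bopp, Bzero; simpl. rewrite !Ropp_0, !Rplus_0_r. reflexivity. Qed.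

Lemma cB_S_near W z : cB W z -> forall eta, 0 < eta -> exists del, 0 < del /\
  forall u v, Rabs (u - fst z) < del -> Rabs (v - snd z) < del -> S (Bsub (W (u,v)) (W z)) < eta.
Proof.
  intros H eta He.
  assert (He4 : 0 < eta / 4) by lra.
  destruct (H b0 ltac:(simpl; tauto) (mkposreal _ He4)) as [d0 H0].
  destruct (H b1 ltac:(simpl; tauto) (mkposreal _ He4)) as [d1 H1].
  destruct (H b2 ltac:(simpl; tauto) (mkposreal _ He4)) as [d2 H2].
  destruct (H b3 ltac:(simpl; tauto) (mkposreal _ He4)) as [d3 H3].
  exists (Rmin (Rmin d0 d1) (Rmin d2 d3)). split.
  { repeat apply Rmin_pos; apply cond_pos. }
  intros u v Hu Hv.
  assert (m0 : Rmin (Rmin d0 d1) (Rmin d2 d3) <= d0) by (eapply Rle_trans; apply Rmin_l).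
  assert (m1 : Rmin (Rmin d0 d1) (Rmin d2 d3) <= d1) by (eapply Rle_trans; [apply Rmin_l|apply Rmin_r]).
  assert (m2 : Rmin (Rmin d0 d1) (Rmin d2 d3) <= d2) by (eapply Rle_trans; [apply Rmin_r|apply Rmin_l]).
  assert (m3 : Rmin (Rmin d0 d1) (Rmin d2 d3) <= d3) by (eapply Rle_trans; apply Rmin_r).
  specialize (H0 u v ltac:(lra) ltac:(lra)). specialize (H1 u v ltac:(lra) ltac:(lra)).
  specialize (H2 u v ltac:(lra) ltac:(lra)). specialize (H3 u v ltac:(lra) ltac:(lra)).
  simpl in *. destruct z as [x y]. simpl in *. unfold S, Bsub, Badd, Bopp. simpl.
  unfold Rminus in *. lra.
Qed.

Lemma small_zero x : (forall eps, 0 < eps -> Rabs x <= eps) -> x = 0.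
Proof.
  intros H. destruct (Req_dec x 0) as [E|E]; auto.
  assert (Hp : 0 < Rabs x) by (apply Rabs_pos_lt; auto).
  specialize (H (Rabs x / 2) ltac:(lra)). lra.
Qed.

Lemma alg1 Dz Vz u v c : u*u+v*v <> 0 ->
  Bsub (Bmul Dz Vz) (Bmul (winv u v) c) =
  Bmul (winv u v) (Bsub (Bmul Dz (Bmul (mkB u 0 v 0) Vz)) c).
Proof.
  intros H. destruct Dz as [d0 d1 d2 d3], Vz as [v0 v1 v2 v3], c as [c0 c1 c2 c3].
  unfold winv, Bsub, Badd, Bopp, Bmul; simpl. f_equal; field; auto.
Qed.

Lemma alg2 Dz Y D1 al :
  Bsub (Bmul Dz Y) (Bmul D1 al) = Badd (Bmul Dz (Bsub Y al)) (Bmul (Bsub Dz D1) al).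
Proof.
  destruct Dz, Y, D1, al. unfold Bsub, Badd, Bopp, Bmul; simpl. f_equal; ring.
Qed.

Lemma winv_id Dz u v : u*u+v*v <> 0 -> Dz = Bmul (winv u v) (Bmul (mkB u 0 v 0) Dz).
Proof. intros. symmetry. apply winv_mul. auto. Qed.

Lemma onb_den px py r x y : 0 < r -> onb px py r x y -> (x - px) * (x - px) + (y - py) * (y - py) <> 0.
Proof.
  intros Hr [H1 [H2 H3]].
  assert (A1 : (x - px) * (x - px) = Rabs (x - px) * Rabs (x - px)) by (rewrite <- Rabs_mult; rewrite Rabs_right; [reflexivity|apply Rle_ge, Rle_0_sqr]).
  assert (A2 : (y - py) * (y - py) = Rabs (y - py) * Rabs (y - py)) by (rewrite <- Rabs_mult; rewrite Rabs_right; [reflexivity|apply Rle_ge, Rle_0_sqr]).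
  pose proof (Rabs_pos (x - px)). pose proof (Rabs_pos (y - py)).
  destruct H3 as [E|E]; rewrite E in *; nra.
Qed.

Lemma onb_pdist px py r x y : onb px py r x y -> Pdist (x,y) (px,py) <= 2 * r.
Proof. intros [H1 [H2 _]]. eapply Rle_trans. apply Pdist_le. simpl. lra. Qed.

Lemma onb_ne px py r x y : 0 < r -> onb px py r x y -> (x,y) <> (px,py).
Proof. intros Hr [H1 [H2 H3]] E. injection E as -> ->. rewrite !Rminus_eq_0, !Rabs_R0 in H3. lra. Qed.

Lemma far x0 y0 x1 y1 r x y : Rabs (x - x0) <= r -> Rabs (y - y0) <= r ->
  r < Rmax (Rabs (x0 - x1)) (Rabs (y0 - y1)) -> (x,y) <> (x1,y1).
Proof.
  intros H1 H2 H3 E. injection E as -> ->.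
  rewrite Rabs_minus_sym in H1. rewrite Rabs_minus_sym in H2.
  assert (Rmax (Rabs (x0 - x1)) (Rabs (y0 - y1)) <= r) by (apply Rmax_lub; auto). lra.
Qed.

Lemma S_D_bound Dz x y px py r : 0 < r -> onb px py r x y ->
  S Dz <= 2 / r * S (Bmul (mkB (x - px) 0 (y - py) 0) Dz).
Proof.
  intros Hr Ho. rewrite (winv_id Dz (x - px) (y - py)) at 1 by (eapply onb_den; eauto).
  eapply Rle_trans. apply S_mul. apply Rmult_le_compat_r. apply S_pos.
  destruct Ho as [H1 [H2 H3]]. apply S_winv; auto.
Qed.


Lemma EI_G c px py r : 0 < r ->
  EI (fun x y => b2 (Bmul (winv (x - px) (y - py)) c))
     (fun x y => b0 (Bmul (winv (x - px) (y - py)) c))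
     (px - r) (px + r) (py - r) (py + r).
Proof.
  intros Hr. destruct c as [c0 c1 c2 c3].
  repeat split; apply (ex_RInt_continuous (V:=R_CompleteNormedModule)); intros t _;
  apply (ex_derive_continuous (K:=R_AbsRing) (V:=R_NormedModule));
  unfold winv, Bmul; simpl; auto_derive;
  repeat split; intro Hz; pose proof (Rle_0_sqr (t + - px)); pose proof (Rle_0_sqr (t + - py));
  pose proof (Rmult_lt_0_compat r r Hr Hr); unfold Rsqr in *; lra.
Qed.


Lemma bs_bound W M R0 R z : (forall z, R0 < Pabs z -> Pabs z * S (W z) <= M) ->
  0 < R -> R0 < R -> R <= Pabs z -> S (W z) <= Rabs M / R.
Proof.
  intros H HR HR0 Hz.
  assert (Hp : 0 < Pabs z) by lra.
  specialize (H z ltac:(lra)).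
  pose proof (Rle_abs M). pose proof (S_pos (W z)).
  apply Rle_trans with (Rabs M / Pabs z).
  - apply Rmult_le_reg_l with (Pabs z); auto. field_simplify; lra.
  - unfold Rdiv. apply Rmult_le_compat_l. apply Rabs_pos. apply Rinv_le_contravar; lra.
Qed.

Lemma onb0_ne R x y x0 y0 : onb 0 0 R x y -> Rabs x0 < R -> Rabs y0 < R -> (x,y) <> (x0,y0).
Proof.
  intros [H1 [H2 H3]] A1 A2 E. injection E as -> ->. rewrite !Rminus_0_r in H3. lra.
Qed.

Lemma onb0_pabs R x y : onb 0 0 R x y -> R <= Pabs (x,y).
Proof.
  intros [H1 [H2 H3]]. rewrite !Rminus_0_r in H3. destruct (Pabs_ge (x,y)) as [A1 A2].
  simpl in *. destruct H3 as [E|E]; lra.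
Qed.

Lemma abs_bounds x : - Rabs x <= x <= Rabs x.
Proof. pose proof (Rle_abs x). pose proof (Rle_abs (- x)). rewrite Rabs_Ropp in *. lra. Qed.


Lemma key a b ad bd D V x0 y0 x1 y1 al :
  (forall z, ad z = Bopp (a z) /\ bd z = Bopp (Bconj (b z))) ->
  is_solution_on a b (punctured (x0,y0)) D -> is_solution_on ad bd (punctured (x1,y1)) V ->
  (x1,y1) <> (x0,y0) ->
  KS D (x0,y0) Bzero -> BS D -> KS V (x1,y1) al -> BS V ->
  b0 (Bmul (D (x1,y1)) al) = 0.
Proof.
  intros Had HsD HsV Hne HkD HbD HkV HbV.
  set (P := fun x y => b2 (Bmul (D (x,y)) (V (x,y)))).
  set (Q := fun x y => b0 (Bmul (D (x,y)) (V (x,y)))).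
  assert (HF : cform (x0,y0) (x1,y1) P Q) by (eapply cform_F; eauto).
  set (d := Rmax (Rabs (x0 - x1)) (Rabs (y0 - y1))).
  assert (Hd : 0 < d).
  { unfold d. destruct (Req_dec x0 x1).
    - subst. assert (y0 <> y1) by (intro; subst; auto).
      eapply Rlt_le_trans; [|apply Rmax_r]. apply Rabs_pos_lt; lra.
    - eapply Rlt_le_trans; [|apply Rmax_l]. apply Rabs_pos_lt; lra. }
  assert (Hdd : d <= Rabs (fst (x0,y0) - fst (x1,y1)) \/ d <= Rabs (snd (x0,y0) - snd (x1,y1))).
  { simpl. unfold d, Rmax. destruct Rle_dec; [right|left]; lra. }
  assert (Hne' : (x0,y0) <> (x1,y1)) by auto.
  set (Rb := Rabs x0 + Rabs y0 + Rabs x1 + Rabs y1 + d).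
  pose proof (abs_bounds x0). pose proof (abs_bounds y0).
  pose proof (abs_bounds x1). pose proof (abs_bounds y1).
  assert (T : forall r0 r1 R, 0 < r0 < d/2 -> 0 < r1 < d/2 -> Rb < R ->
     Irect P Q (0 - R) (0 + R) (0 - R) (0 + R) =
     Irect P Q (x0 - r0) (x0 + r0) (y0 - r0) (y0 + r0) + Irect P Q (x1 - r1) (x1 + r1) (y1 - r1) (y1 + r1)).
  { intros r0 r1 R Hr0 Hr1 HR. unfold Rb in HR.
    apply (two (x0,y0) (x1,y1) P Q _ _ _ _ r0 r1 d HF); simpl; try lra; auto. }
  assert (B0 : forall eps, 0 < eps -> exists r0, 0 < r0 < d/2 /\
      Rabs (Irect P Q (x0 - r0) (x0 + r0) (y0 - r0) (y0 + r0)) <= eps).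
  { intros eps He.
    assert (cV : cB V (x0,y0)) by (eapply sol_cB; eauto).
    destruct (cB_S_near V (x0,y0) cV 1 Rlt_0_1) as [dV [HdV HV1]].
    set (KV := S (V (x0,y0)) + 1).
    assert (HKV : 0 < KV) by (unfold KV; pose proof (S_pos (V (x0,y0))); lra).
    destruct (HkD (eps / (16 * KV)) ltac:(apply Rdiv_lt_0_compat; lra)) as [dD [HdD HD1]].
    set (r0 := Rmin (d/4) (Rmin (dV/2) (dD/4))).
    assert (Hr0 : 0 < r0) by (unfold r0; repeat apply Rmin_pos; lra).
    assert (r0a : r0 <= d/4) by (unfold r0; apply Rmin_l).
    assert (r0b : r0 <= dV/2) by (unfold r0; eapply Rle_trans; [apply Rmin_r|apply Rmin_l]).
    assert (r0c : r0 <= dD/4) by (unfold r0; eapply Rle_trans; [apply Rmin_r|apply Rmin_r]).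
    exists r0. split; [lra|].
    replace eps with (8 * r0 * (2 / r0 * (eps / (16 * KV)) * KV)) by (field; lra).
    apply Irect_sq_bound; auto.
    - apply (EI_sq (x0,y0) (x1,y1)); auto. intros x y Ho. split.
      + exact (onb_ne _ _ _ _ _ Hr0 Ho).
      + destruct Ho as [Ho1 [Ho2 _]]. apply (far x0 y0 x1 y1 r0); auto. fold d. lra.
    - intros x y Ho.
      assert (SB : S (Bmul (D (x,y)) (V (x,y))) <= 2 / r0 * (eps / (16 * KV)) * KV).
      { eapply Rle_trans. apply S_mul. apply Rmult_le_compat.
        apply S_pos. apply S_pos.
        - eapply Rle_trans. apply (S_D_bound (D (x,y)) x y x0 y0 r0); auto.
          apply Rmult_le_compat_l. left; apply Rdiv_lt_0_compat; lra.
          left.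
          replace (mkB (x - x0) 0 (y - y0) 0) with (Bsub (zB (x,y)) (zB (x0,y0))) by (rewrite zdiff; reflexivity).
          rewrite <- S_sub0. apply HD1. exact (onb_ne _ _ _ _ _ Hr0 Ho).
          pose proof (onb_pdist _ _ _ _ _ Ho); lra.
        - destruct Ho as [Ho1 [Ho2 _]]. pose proof (S_tri (V (x,y)) (V (x0,y0))).
          pose proof (HV1 x y ltac:(simpl; lra) ltac:(simpl; lra)). unfold KV; lra. }
      pose proof (comps_le_S (Bmul (D (x,y)) (V (x,y)))). unfold P, Q. split; lra. }
  assert (BR : forall eps, 0 < eps -> exists R, Rb < R /\
      Rabs (Irect P Q (0 - R) (0 + R) (0 - R) (0 + R)) <= eps).
  { intros eps He. destruct HbD as [MD [RD HMD]]. destruct HbV as [MV [RV HMV]].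
    set (M := Rabs MD * Rabs MV).
    assert (HM : 0 <= M) by (unfold M; apply Rmult_le_pos; apply Rabs_pos).
    assert (HM2 : 0 <= 8 * M / eps) by (apply Rmult_le_pos; [lra|left; apply Rinv_0_lt_compat; lra]).
    pose proof (abs_bounds Rb). pose proof (abs_bounds RD). pose proof (abs_bounds RV).
    set (RR := Rabs Rb + Rabs RD + Rabs RV + 1 + 8 * M / eps).
    assert (HR0 : 0 < RR) by (unfold RR; lra).
    exists RR. split; [unfold RR; lra|].
    apply Rle_trans with (8 * RR * (M / (RR * RR))).
    - apply Irect_sq_bound; auto.
      + apply (EI_sq (x0,y0) (x1,y1)); auto. intros x y Ho. split.
        * apply (onb0_ne RR); [exact Ho| |]; unfold RR, Rb in *; lra.
        * apply (onb0_ne RR); [exact Ho| |]; unfold RR, Rb in *; lra.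
      + intros x y Ho.
        pose proof (onb0_pabs RR x y Ho).
        assert (S1 : S (D (x,y)) <= Rabs MD / RR) by (apply (bs_bound D MD RD RR); auto; unfold RR; lra).
        assert (S2 : S (V (x,y)) <= Rabs MV / RR) by (apply (bs_bound V MV RV RR); auto; unfold RR; lra).
        assert (SB : S (Bmul (D (x,y)) (V (x,y))) <= M / (RR * RR)).
        { eapply Rle_trans. apply S_mul.
          replace (M / (RR * RR)) with ((Rabs MD / RR) * (Rabs MV / RR)) by (unfold M; field; lra).
          apply Rmult_le_compat; auto; apply S_pos. }
        pose proof (comps_le_S (Bmul (D (x,y)) (V (x,y)))). unfold P, Q. split; lra.
    - replace (8 * RR * (M / (RR * RR))) with (8 * M / RR) by (field; lra).
      apply Rmult_le_reg_l with RR; auto. field_simplify; try lra.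
      assert (HH8 : 8 * M / eps <= RR) by (unfold RR; lra).
      assert (8 * M <= RR * eps).
      { apply Rmult_le_reg_r with (/ eps). apply Rinv_0_lt_compat; lra.
        replace (RR * eps * / eps) with RR by (field; lra). exact HH8. }
      lra. }
  assert (Z1 : forall r1, 0 < r1 < d/2 -> Irect P Q (x1 - r1) (x1 + r1) (y1 - r1) (y1 + r1) = 0).
  { intros r1 Hr1. apply small_zero. intros eps He.
    destruct (B0 (eps/2) ltac:(lra)) as [r0 [Hr0 Hi0]].
    destruct (BR (eps/2) ltac:(lra)) as [R [HR HR']].
    rewrite (T r0 r1 R Hr0 Hr1 HR) in HR'.
    revert Hi0 HR'. generalize (Irect P Q (x0 - r0) (x0 + r0) (y0 - r0) (y0 + r0)).
    generalize (Irect P Q (x1 - r1) (x1 + r1) (y1 - r1) (y1 + r1)).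
    intros i1 i0. unfold Rabs. repeat destruct Rcase_abs; lra. }
  set (c := Bmul (D (x1,y1)) al).
  assert (Hat : 0 < atan 1) by (rewrite atan_1; pose proof PI_RGT_0; lra).
  apply small_zero. intros eps He.
  set (eta := eps * 8 * atan 1).
  assert (Heta : 0 < eta) by (unfold eta; apply Rmult_lt_0_compat; lra).
  assert (cD : cB D (x1,y1)) by (eapply sol_cB; eauto).
  set (KA := S (D (x1,y1)) + 1 + S al).
  assert (HKA : 0 < KA) by (unfold KA; pose proof (S_pos (D (x1,y1))); pose proof (S_pos al); lra).
  set (et := eta / (16 * KA)).
  assert (Het : 0 < et) by (unfold et; apply Rdiv_lt_0_compat; lra).
  destruct (cB_S_near D (x1,y1) cD (Rmin 1 et) ltac:(apply Rmin_pos; lra)) as [dD [HdD HD1]].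
  destruct (HkV et Het) as [dV [HdV HV1]].
  set (r := Rmin (d/4) (Rmin (dD/2) (dV/4))).
  assert (Hr : 0 < r) by (unfold r; repeat apply Rmin_pos; lra).
  assert (ra : r <= d/4) by (unfold r; apply Rmin_l).
  assert (rb : r <= dD/2) by (unfold r; eapply Rle_trans; [apply Rmin_r|apply Rmin_l]).
  assert (rc : r <= dV/4) by (unfold r; eapply Rle_trans; [apply Rmin_r|apply Rmin_r]).
  assert (Hz := Z1 r ltac:(lra)).
  set (PG := fun x y => b2 (Bmul (winv (x - x1) (y - y1)) c)).
  set (QG := fun x y => b0 (Bmul (winv (x - x1) (y - y1)) c)).
  assert (EF : EI P Q (x1 - r) (x1 + r) (y1 - r) (y1 + r)).
  { apply (EI_sq (x0,y0) (x1,y1)); auto. intros x y Ho. split.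
    - destruct Ho as [Ho1 [Ho2 _]]. apply (far x1 y1 x0 y0 r); auto.
      rewrite (Rabs_minus_sym x1 x0), (Rabs_minus_sym y1 y0). fold d. lra.
    - exact (onb_ne _ _ _ _ _ Hr Ho). }
  assert (EG := EI_G c x1 y1 r Hr).
  assert (Em := Irect_minus P Q PG QG _ _ _ _ EF EG).
  assert (MT : Irect PG QG (x1 - r) (x1 + r) (y1 - r) (y1 + r) = 8 * b0 c * atan 1)
    by (apply main_term; auto).
  rewrite Hz, MT in Em.
  assert (Bd : Rabs (Irect (fun x y => P x y - PG x y) (fun x y => Q x y - QG x y)
                  (x1 - r) (x1 + r) (y1 - r) (y1 + r)) <= 8 * r * (2 / r * (KA * et))).
  { apply Irect_sq_bound; auto. apply EI_minus; auto.
    intros x y Ho.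
    set (Dz := D (x,y)). set (Vz := V (x,y)).
    assert (Hden := onb_den _ _ _ _ _ Hr Ho).
    assert (E1 : P x y - PG x y = b2 (Bsub (Bmul Dz Vz) (Bmul (winv (x - x1) (y - y1)) c)))
      by (rewrite comp_sub by (simpl; tauto); reflexivity).
    assert (E2 : Q x y - QG x y = b0 (Bsub (Bmul Dz Vz) (Bmul (winv (x - x1) (y - y1)) c)))
      by (rewrite comp_sub by (simpl; tauto); reflexivity).
    assert (SB : S (Bsub (Bmul Dz Vz) (Bmul (winv (x - x1) (y - y1)) c)) <= 2 / r * (KA * et)).
    { rewrite alg1 by auto. eapply Rle_trans. apply S_mul.
      destruct Ho as [Ho1 [Ho2 Ho3]].
      apply Rmult_le_compat. apply S_pos. apply S_pos. apply S_winv; auto.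
      unfold c. rewrite alg2. eapply Rle_trans. apply S_add.
      assert (N1 : S (Bsub Dz (D (x1,y1))) < Rmin 1 et) by (apply HD1; simpl; lra).
      assert (N1a : Rmin 1 et <= 1) by apply Rmin_l.
      assert (N1b : Rmin 1 et <= et) by apply Rmin_r.
      assert (N2 : S (Bsub (Bmul (mkB (x - x1) 0 (y - y1) 0) Vz) al) < et).
      { replace (mkB (x - x1) 0 (y - y1) 0) with (Bsub (zB (x,y)) (zB (x1,y1))) by (rewrite zdiff; reflexivity).
        apply HV1. apply (onb_ne x1 y1 r); auto. split; auto.
        pose proof (onb_pdist x1 y1 r x y (conj Ho1 (conj Ho2 Ho3))); lra. }
      pose proof (S_tri Dz (D (x1,y1))).
      pose proof (S_mul Dz (Bsub (Bmul (mkB (x - x1) 0 (y - y1) 0) Vz) al)).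
      pose proof (S_mul (Bsub Dz (D (x1,y1))) al).
      pose proof (S_pos al). pose proof (S_pos Dz).
      pose proof (S_pos (Bsub (Bmul (mkB (x - x1) 0 (y - y1) 0) Vz) al)).
      pose proof (S_pos (Bsub Dz (D (x1,y1)))).
      unfold KA. nra. }
    pose proof (comps_le_S (Bsub (Bmul Dz Vz) (Bmul (winv (x - x1) (y - y1)) c))).
    rewrite E1, E2. split; lra. }
  rewrite Em in Bd.
  replace (8 * r * (2 / r * (KA * et))) with eta in Bd by (unfold et; field; lra).
  unfold eta in Bd. rewrite Rminus_0_l, Rabs_Ropp in Bd.
  rewrite !Rabs_mult in Bd. rewrite (Rabs_right 8) in Bd by lra.
  rewrite (Rabs_right (atan 1)) in Bd by lra.
  assert (0 <= Rabs (b0 c)) by apply Rabs_pos.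
  nra.
Qed.


Definition Bi : B := mkB 0 1 0 0.

Lemma dbar_sub A Bc x1 y1 w1 x2 y2 w2 :
  dbar_of x1 y1 = Badd (Bmul A w1) (Bmul Bc (Bconj w1)) ->
  dbar_of x2 y2 = Badd (Bmul A w2) (Bmul Bc (Bconj w2)) ->
  dbar_of (Bsub x1 x2) (Bsub y1 y2) = Badd (Bmul A (Bsub w1 w2)) (Bmul Bc (Bconj (Bsub w1 w2))).
Proof.
  destruct A, Bc, x1, y1, w1, x2, y2, w2.
  unfold dbar_of, Bscal, Badd, Bsub, Bopp, Bmul, Bconj, Bj; simpl.
  intros H1 H2. injection H1 as E0 E1 E2 E3. injection H2 as F0 F1 F2 F3.
  f_equal; lra.
Qed.

Lemma dbar_i A Bc x1 y1 w1 :
  dbar_of x1 y1 = Badd (Bmul A w1) (Bmul Bc (Bconj w1)) ->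
  dbar_of (Bmul Bi x1) (Bmul Bi y1) = Badd (Bmul A (Bmul Bi w1)) (Bmul Bc (Bconj (Bmul Bi w1))).
Proof.
  destruct A, Bc, x1, y1, w1.
  unfold dbar_of, Bscal, Badd, Bsub, Bopp, Bmul, Bconj, Bj, Bi; simpl.
  intros H1. injection H1 as E0 E1 E2 E3.
  f_equal; lra.
Qed.

Lemma Bsub_split A B0 A' B0' : Bsub (Bsub A B0) (Bsub A' B0') = Bsub (Bsub A A') (Bsub B0 B0').
Proof. destruct A, B0, A', B0'. unfold Bsub, Badd, Bopp; simpl. f_equal; ring. Qed.

Lemma Bi_sub A A' : Bsub (Bmul Bi A) (Bmul Bi A') = Bmul Bi (Bsub A A').
Proof. destruct A, A'. unfold Bsub, Badd, Bopp, Bmul, Bi; simpl. f_equal; ring. Qed.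

Lemma S_Bi X : S (Bmul Bi X) = S X.
Proof. destruct X as [x0 x1 x2 x3]. unfold S, Bmul, Bi; simpl.
  replace (0 * x0 - 1 * x1 - 0 * x2 + 0 * x3) with (- x1) by ring.
  replace (0 * x1 + 1 * x0 - 0 * x3 - 0 * x2) with x0 by ring.
  replace (0 * x2 + 0 * x0 - 1 * x3 - 0 * x1) with (- x3) by ring.
  replace (0 * x3 + 0 * x0 + 1 * x2 + 0 * x1) with x2 by ring.
  rewrite !Rabs_Ropp. ring.
Qed.

Lemma cw_sub U f g z : cont_within U f z -> cont_within U g z ->
  cont_within U (fun w => Bsub (f w) (g w)) z.
Proof.
  intros Hf Hg eps He.
  destruct (Hf (eps/8) ltac:(lra)) as [d1 [Hd1 H1]].
  destruct (Hg (eps/8) ltac:(lra)) as [d2 [Hd2 H2]].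
  exists (Rmin d1 d2). split. apply Rmin_pos; auto.
  intros w Uw Hw.
  assert (w1 : Pdist w z < d1) by (eapply Rlt_le_trans; [exact Hw|apply Rmin_l]).
  assert (w2 : Pdist w z < d2) by (eapply Rlt_le_trans; [exact Hw|apply Rmin_r]).
  specialize (H1 w Uw w1). specialize (H2 w Uw w2).
  rewrite Bsub_split. eapply Rle_lt_trans. apply Bnorm_le_S.
  eapply Rle_lt_trans. apply S_sub.
  pose proof (S_le_Bnorm (Bsub (f w) (f z))). pose proof (S_le_Bnorm (Bsub (g w) (g z))). lra.
Qed.

Lemma cw_i U f z : cont_within U f z -> cont_within U (fun w => Bmul Bi (f w)) z.
Proof.
  intros Hf eps He.
  destruct (Hf (eps/4) ltac:(lra)) as [d1 [Hd1 H1]].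
  exists d1. split; auto. intros w Uw Hw. specialize (H1 w Uw Hw).
  rewrite Bi_sub. eapply Rle_lt_trans. apply Bnorm_le_S. rewrite S_Bi.
  pose proof (S_le_Bnorm (Bsub (f w) (f z))). lra.
Qed.

Lemma sol_sub A Bc U W1 W2 : is_solution_on A Bc U W1 -> is_solution_on A Bc U W2 ->
  is_solution_on A Bc U (fun z => Bsub (W1 z) (W2 z)).
Proof.
  intros [X1 [Y1 H1]] [X2 [Y2 H2]].
  exists (fun z => Bsub (X1 z) (X2 z)), (fun z => Bsub (Y1 z) (Y2 z)).
  intros z Uz. destruct (H1 z Uz) as [A1 [A2 [A3 [A4 A5]]]].
  destruct (H2 z Uz) as [B1 [B2 [B3 [B4 B5]]]].
  split; [|split; [|split; [|split]]].
  - intros c Hc. specialize (A1 c Hc). specialize (B1 c Hc).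
    comps_cases Hc; cbn; apply dR_plus; auto; apply dR_opp; auto.
  - intros c Hc. specialize (A2 c Hc). specialize (B2 c Hc).
    comps_cases Hc; cbn; apply dR_plus; auto; apply dR_opp; auto.
  - apply cw_sub; auto.
  - apply cw_sub; auto.
  - apply dbar_sub; auto.
Qed.

Lemma dR_const (a x : R) : is_derive (fun _ : R => a) x 0.
Proof. exact (is_derive_const (K:=R_AbsRing) a x). Qed.

Ltac dtac2 := match goal with
 | |- is_derive (fun t => _ + _) _ _ => apply dR_plus; dtac2
 | |- is_derive (fun t => _ - _) _ _ => apply dR_minus; dtac2
 | |- is_derive (fun t => _ * _) _ _ => apply dR_mult; dtac2
 | |- is_derive (fun t => ?c) _ _ => apply dR_const
 | |- _ => eassumption
 end.

Lemma Bmul_zero_l X Y : Badd (Bmul Bzero X) (Bmul Bi Y) = Bmul Bi Y.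
Proof. destruct X, Y. unfold Badd, Bmul, Bzero, Bi; simpl. f_equal; ring. Qed.

Lemma dBi (f : R -> B) x df :
  (forall c, In c comps -> is_derive (fun t => c (f t)) x (c df)) ->
  forall c, In c comps -> is_derive (fun t => c (Bmul Bi (f t))) x (c (Bmul Bi df)).
Proof.
  intros Hf c Hc.
  assert (H0 : forall c, In c comps -> is_derive (fun _ : R => c Bi) x (c Bzero)).
  { intros c' Hc'. comps_cases Hc'; apply dR_const. }
  pose proof (dB_mul (fun _ => Bi) f x Bzero df H0 Hf c Hc) as H.
  rewrite Bmul_zero_l in H. exact H.
Qed.

Lemma sol_i A Bc U W : is_solution_on A Bc U W ->
  is_solution_on A Bc U (fun z => Bmul Bi (W z)).
Proof.
  intros [X1 [Y1 H1]].
  exists (fun z => Bmul Bi (X1 z)), (fun z => Bmul Bi (Y1 z)).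
  intros z Uz. destruct (H1 z Uz) as [A1 [A2 [A3 [A4 A5]]]].
  split; [|split; [|split; [|split]]].
  - exact (dBi (fun t => W (t, snd z)) (fst z) (X1 z) A1).
  - exact (dBi (fun t => W (fst z, t)) (snd z) (Y1 z) A2).
  - apply cw_i; auto.
  - apply cw_i; auto.
  - apply dbar_i; auto.
Qed.


Lemma Pabs_pos z : 0 <= Pabs z.
Proof. pose proof (Pabs_ge z) as [H _]. pose proof (Rabs_pos (fst z)). lra. Qed.

Lemma KS_of_kl W z0 al : kernel_limit W z0 al -> KS W z0 al.
Proof.
  intros H eps He. destruct (H (eps/4) ltac:(lra)) as [d [Hd H1]].
  exists d; split; auto. intros z Hz Hp. specialize (H1 z Hz Hp).
  pose proof (S_le_Bnorm (Bsub (Bmul (Bsub (zB z) (zB z0)) (W z)) al)). lra.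
Qed.

Lemma id_diff w X Y be : Bsub (Bmul w (Bsub X Y)) Bzero = Bsub (Bsub (Bmul w X) be) (Bsub (Bmul w Y) be).
Proof. destruct w, X, Y, be. unfold Bsub, Badd, Bopp, Bmul, Bzero; simpl. f_equal; ring. Qed.

Lemma KS_diff W W' z0 be : kernel_limit W z0 be -> kernel_limit W' z0 be ->
  KS (fun z => Bsub (W z) (W' z)) z0 Bzero.
Proof.
  intros H H' eps He. destruct (H (eps/8) ltac:(lra)) as [d [Hd H1]].
  destruct (H' (eps/8) ltac:(lra)) as [d' [Hd' H1']].
  exists (Rmin d d'). split. apply Rmin_pos; auto. intros z Hz Hp.
  assert (p1 : Pdist z z0 < d) by (eapply Rlt_le_trans; [exact Hp|apply Rmin_l]).
  assert (p2 : Pdist z z0 < d') by (eapply Rlt_le_trans; [exact Hp|apply Rmin_r]).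
  specialize (H1 z Hz p1). specialize (H1' z Hz p2).
  rewrite (id_diff _ _ _ be). eapply Rle_lt_trans. apply S_sub.
  pose proof (S_le_Bnorm (Bsub (Bmul (Bsub (zB z) (zB z0)) (W z)) be)).
  pose proof (S_le_Bnorm (Bsub (Bmul (Bsub (zB z) (zB z0)) (W' z)) be)). lra.
Qed.

Lemma id_i w X : Bsub (Bmul w (Bmul Bi X)) Bzero = Bmul Bi (Bsub (Bmul w X) Bzero).
Proof. destruct w, X. unfold Bsub, Badd, Bopp, Bmul, Bzero, Bi; simpl. f_equal; ring. Qed.

Lemma KS_i D z0 : KS D z0 Bzero -> KS (fun z => Bmul Bi (D z)) z0 Bzero.
Proof.
  intros H eps He. destruct (H eps He) as [d [Hd H1]]. exists d; split; auto.
  intros z Hz Hp. rewrite id_i, S_Bi. auto.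
Qed.

Lemma BS_of W : bigO_inv W -> BS W.
Proof.
  intros [M [R0 H]]. exists (4 * M), R0. intros z Hz. specialize (H z Hz).
  pose proof (S_le_Bnorm (W z)). pose proof (Pabs_pos z).
  apply Rle_trans with (Pabs z * (4 * Bnorm (W z))). apply Rmult_le_compat_l; auto. lra.
Qed.

Lemma BS_diff W W' : BS W -> BS W' -> BS (fun z => Bsub (W z) (W' z)).
Proof.
  intros [M [R0 H]] [M' [R0' H']]. exists (M + M'), (Rmax R0 R0'). intros z Hz.
  assert (z1 : R0 < Pabs z) by (eapply Rle_lt_trans; [apply Rmax_l|exact Hz]).
  assert (z2 : R0' < Pabs z) by (eapply Rle_lt_trans; [apply Rmax_r|exact Hz]).
  specialize (H z z1). specialize (H' z z2).
  pose proof (S_sub (W z) (W' z)). pose proof (Pabs_pos z).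
  apply Rle_trans with (Pabs z * (S (W z) + S (W' z))). apply Rmult_le_compat_l; auto. lra.
Qed.

Lemma BS_i W : BS W -> BS (fun z => Bmul Bi (W z)).
Proof. intros [M [R0 H]]. exists M, R0. intros z Hz. rewrite S_Bi. auto. Qed.

Lemma diff_zero a b ad bd W W' V1 Vj x0 y0 x1 y1 be :
  (forall z, ad z = Bopp (a z) /\ bd z = Bopp (Bconj (b z))) ->
  is_solution_on a b (punctured (x0,y0)) W -> is_solution_on a b (punctured (x0,y0)) W' ->
  kernel_limit W (x0,y0) be -> kernel_limit W' (x0,y0) be -> bigO_inv W -> bigO_inv W' ->
  is_solution_on ad bd (punctured (x1,y1)) V1 -> is_solution_on ad bd (punctured (x1,y1)) Vj ->
  kernel_limit V1 (x1,y1) Bone -> kernel_limit Vj (x1,y1) Bj -> bigO_inv V1 -> bigO_inv Vj ->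
  (x1,y1) <> (x0,y0) -> W (x1,y1) = W' (x1,y1).
Proof.
  intros Had sW sW' kW kW' bW bW' sV1 sVj kV1 kVj bV1 bVj Hne.
  set (D := fun z => Bsub (W z) (W' z)).
  assert (sD : is_solution_on a b (punctured (x0,y0)) D) by (apply sol_sub; auto).
  assert (kD : KS D (x0,y0) Bzero) by (eapply KS_diff; eauto).
  assert (bD : BS D) by (apply BS_diff; apply BS_of; auto).
  assert (sDi := sol_i _ _ _ _ sD). assert (kDi := KS_i _ _ kD). assert (bDi := BS_i _ bD).
  assert (k1 := key a b ad bd D V1 x0 y0 x1 y1 Bone Had sD sV1 Hne kD bD (KS_of_kl _ _ _ kV1) (BS_of _ bV1)).
  assert (k2 := key a b ad bd _ V1 x0 y0 x1 y1 Bone Had sDi sV1 Hne kDi bDi (KS_of_kl _ _ _ kV1) (BS_of _ bV1)).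
  assert (k3 := key a b ad bd D Vj x0 y0 x1 y1 Bj Had sD sVj Hne kD bD (KS_of_kl _ _ _ kVj) (BS_of _ bVj)).
  assert (k4 := key a b ad bd _ Vj x0 y0 x1 y1 Bj Had sDi sVj Hne kDi bDi (KS_of_kl _ _ _ kVj) (BS_of _ bVj)).
  unfold D in *. cbv beta in k1, k2, k3, k4.
  destruct (W (x1,y1)) as [w0 w1 w2 w3], (W' (x1,y1)) as [v0 v1 v2 v3].
  unfold Bsub, Badd, Bopp, Bmul, Bone, Bj, Bi in k1, k2, k3, k4; simpl in k1, k2, k3, k4.
  f_equal; lra.
Qed.

Lemma uniq_gen a b ad bd :
  (forall z, ad z = Bopp (a z) /\ bd z = Bopp (Bconj (b z))) ->
  (exists V1 Vj, decaying_kernel ad bd V1 Vj) -> unique_decaying_kernel a b.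
Proof.
  intros Had [V1 [Vj [HKV HBV]]] Z1 Zj Z1' Zj' [HK HB] [HK' HB'] z0 z Hz.
  destruct z0 as [x0 y0], z as [x1 y1].
  destruct (HK (x0,y0)) as [s1 [sj [k1 kj]]].
  destruct (HK' (x0,y0)) as [s1' [sj' [k1' kj']]].
  destruct (HKV (x1,y1)) as [v1 [vj [l1 lj]]].
  destruct (HB (x0,y0)) as [b1 bj]. destruct (HB' (x0,y0)) as [b1' bj'].
  destruct (HBV (x1,y1)) as [c1 cj].
  split; [apply (diff_zero a b ad bd _ _ (V1 (x1,y1)) (Vj (x1,y1)) x0 y0 x1 y1 Bone) | apply (diff_zero a b ad bd _ _ (V1 (x1,y1)) (Vj (x1,y1)) x0 y0 x1 y1 Bj)]; auto.
Qed.

Lemma Bopp_Bopp x : Bopp (Bopp x) = x.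
Proof. destruct x. unfold Bopp; simpl. f_equal; ring. Qed.
Lemma Bconj_opp_conj x : Bopp (Bconj (Bopp (Bconj x))) = x.
Proof. destruct x. unfold Bopp, Bconj; simpl. f_equal; ring. Qed.

Theorem mainTheorem5 (a b : Pt -> B) :
  holder a -> holder b ->
  (exists Z1 Zj, decaying_kernel a b Z1 Zj) ->
  (exists V1 Vj, decaying_kernel (fun z => Bopp (a z)) (fun z => Bopp (Bconj (b z))) V1 Vj) ->
  unique_decaying_kernel a b /\
  unique_decaying_kernel (fun z => Bopp (a z)) (fun z => Bopp (Bconj (b z))).
Proof.
  intros _ _ HZ HV. split.
  - apply (uniq_gen a b (fun z => Bopp (a z)) (fun z => Bopp (Bconj (b z)))); auto.
  - apply (uniq_gen _ _ a b); auto. intros z. rewrite Bopp_Bopp, Bconj_opp_conj. auto.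
Qed.
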